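(* Let $p\ge0$, $\Omega,K>0$, $S\in\mathcal B_{\Omega,K}$, and for $x\in[0,\pi]$ let $\psi(x)=(E+\tilde H(x))^{-1}\tilde\psi(x)\in m$ and $g(x)=\tilde Q(x)T^{-1}\psi(x)$. Then for each $x\in[0,\pi]$, $n\ge1$, $i\in\{0,1\}$, with $C$ depending only on $p,\Omega,K$: (1) $|\psi_{ni}(x)|\le C$; (2) $|g_{ni}(x)|\le C$; (3) $\{g_{ni}(x)\}\in l_2$ and $\|\{g_{ni}(x)\}\|_{l_2}\le C$; (4) $\{g_{n0}(x)-g_{n1}(x)\}_{n\ge1}\in l_1$ and $\sum_n|g_{n0}(x)-g_{n1}(x)|\le C$.
   Context: $\mathcal S_p$: collections $S=\{\lambda_n,\alpha_n\}_{n\ge1}$ of complex numbers with $\rho_n:=\sqrt{\lambda_n}$ ($\arg\rho_n\in[-\pi/2,\pi/2)$), $\rho_n=n-p-1+\varkappa_n$, $\alpha_n=2/\pi+\kappa_n$, $\{\varkappa_n\},\{\kappa_n\}\in l_2$. Model data: $\tilde\rho_n=0$ for $n\le p+1$, $\tilde\rho_n=n-p-1$ for $n\ge p+1$, $\tilde\lambda_n=\tilde\rho_n^2$; $\tilde\alpha_1=1/\pi$, $\tilde\alpha_n=0$ for $2\le n\le p+1$, $\tilde\alpha_n=2/\pi$ for $n\ge p+2$. $\xi_n=|\rho_n-\tilde\rho_n|+|\alpha_n-\tilde\alpha_n|$, $\mathcal B_\Omega=\{S\in\mathcal S_p:(\sum\xi_n^2)^{1/2}\le\Omega\}$. Notation: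 $\lambda_{n0}=\lambda_n,\rho_{n0}=\rho_n,\alpha_{n0}=\alpha_n$, $\lambda_{n1}=\tilde\lambda_n,\rho_{n1}=\tilde\rho_n,\alpha_{n1}=\tilde\alpha_n$, $\hat\rho_n=\rho_n-\tilde\rho_n$; $\tilde\varphi_{ni}(x)=\cos(\rho_{ni}x)$; $\tilde D(x,\lambda,\mu)=\int_0^x\cos(\sqrt\lambda t)\cos(\sqrt\mu t)dt$; $\tilde Q_{ni,kj}(x)=\alpha_{kj}\tilde D(x,\rho_{ni}^2,\rho_{kj}^2)$; $\tilde Q_{nk}=\begin{pmatrix}\tilde Q_{n0,k0}&-\tilde Q_{n0,k1}\\ \tilde Q_{n1,k0}&-\tilde Q_{n1,k1}\end{pmatrix}$; $T_k^{-1}=\begin{pmatrix}\hat\rho_k&1\\0&1\end{pmatrix}$; for $\hat\rho_n\neq0$, $T_n=\begin{pmatrix}\hat\rho_n^{-1}&-\hat\rho_n^{-1}\\0&1\end{pmatrix}$. $\tilde\psi_n=T_n(\tilde\varphi_{n0},\tilde\varphi_{n1})^T$ if $\hat\rho_n\ne0$, $\tilde\psi_n=(-x\sin(\rho_{n1}x),\cos(\rho_{n1}x))^T$ if $\hat\rho_n=0$; $\tilde\psi=(\tilde\psi_n)_{n\ge1}$. $\tilde H_{nk}=T_n\tilde Q_{nk}T_k^{-1}$ if $\hat\rho_n\neq0$; $\tilde H_{nk}=\begin{pmatrix}\partial_\rho[\alpha_{k0}\tilde D(x,\rho^2,\lambda_{k0})]_{\rho=\rho_{n0}}&-\partial_\rho[\alpha_{k1}\tilde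 D(x,\rho^2,\lambda_{k1})]_{\rho=\rho_{n0}}\\ \tilde Q_{n1,k0}&-\tilde Q_{n1,k1}\end{pmatrix}T_k^{-1}$ if $\hat\rho_n=0$. $m$: Banach space of bounded sequences $(a_{ni})_{n\ge1,i=0,1}$ with sup norm; $(\tilde H(x)a)_n=\sum_k\tilde H_{nk}(x)a_k$; $E$ identity; for $f\in m$, $(T^{-1}f)_n=(\hat\rho_nf_{n0}+f_{n1},f_{n1})^T$, $(\tilde Q(x)T^{-1}f)_n=\sum_k\tilde Q_{nk}(x)T_k^{-1}f_k$. $\mathcal B_{\Omega,K}=\{S\in\mathcal B_\Omega:$ for every $x\in[0,\pi]$, $E+\tilde H(x)$ is invertible on $m$ and $\|(E+\tilde H(x))^{-1}\|_{m\to m}\le K\}$. *)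

(* Defs.v *)
From Stdlib Require Import Reals Lra Arith.
From Coquelicot Require Import Coquelicot.

Open Scope R_scope.

(* cos(a+ib) = cos a cosh b - i sin a sinh b ; sin(a+ib) = sin a cosh b + i cos a sinh b *)
Definition ccos (z : C) : C := (cos (fst z) * cosh (snd z), - (sin (fst z) * sinh (snd z))).
Definition csin (z : C) : C := (sin (fst z) * cosh (snd z), cos (fst z) * sinh (snd z)).

(* The square root with arg in [-pi/2, pi/2): the unique rho with rho^2 = w and
   (Re rho > 0) or (Re rho = 0 and Im rho <= 0). *)
Definition csqrt (w : C) : C :=
  let r := Cmod w in
  (sqrt ((r + fst w) / 2),
   match Rlt_dec 0 (snd w) with
   | left _ => sqrt ((r - fst w) / 2)
   | right _ => - sqrt ((r - fst w) / 2)
   end).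

(** * 2x2 complex matrices / vectors.  A vector (v0, v1) : C * C stores the
    components with index i = 0 (fst) and i = 1 (snd). *)
Definition vec2 := (C * C)%type.
Definition mat2 := ((C * C) * (C * C))%type.   (* ((a11,a12),(a21,a22)) *)

Definition mv (M : mat2) (v : vec2) : vec2 :=
  ((fst (fst M) * fst v + snd (fst M) * snd v)%C,
   (fst (snd M) * fst v + snd (snd M) * snd v)%C).

Definition mm (A B : mat2) : mat2 :=
  (((fst (fst A) * fst (fst B) + snd (fst A) * fst (snd B))%C,
    (fst (fst A) * snd (fst B) + snd (fst A) * snd (snd B))%C),
   ((fst (snd A) * fst (fst B) + snd (snd A) * fst (snd B))%C,
    (fst (snd A) * snd (fst B) + snd (snd A) * snd (snd B))%C)).

(** * Spectral data S = {lambda_n, alpha_n}_{n>=1} (index 0 of the sequences is unused)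
    and the model data.  Indices i = 0,1 are encoded by bool: false = 0, true = 1. *)

Definition rho (lam : nat -> C) (n : nat) : C := csqrt (lam n).

Definition rhot (p n : nat) : R := if (n <=? p + 1)%nat then 0 else INR n - INR p - 1.

Definition alphat (p n : nat) : R :=
  if (n =? 1)%nat then 1 / PI else if (n <=? p + 1)%nat then 0 else 2 / PI.

Definition rhohat (p : nat) (lam : nat -> C) (n : nat) : C :=
  (rho lam n - RtoC (rhot p n))%C.

Definition rhoi (p : nat) (lam : nat -> C) (n : nat) (i : bool) : C :=
  if i then RtoC (rhot p n) else rho lam n.
Definition lami (p : nat) (lam : nat -> C) (n : nat) (i : bool) : C :=
  if i then RtoC (rhot p n * rhot p n) else lam n.
Definition alphai (p : nat) (alpha : nat -> C) (n : nat) (i : bool) : C :=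
  if i then RtoC (alphat p n) else alpha n.

Definition l2seq (a : nat -> C) : Prop := ex_series (fun j => Cmod (a (S j)) ^ 2).

Definition in_Sp (p : nat) (lam alpha : nat -> C) : Prop :=
  exists varkappa kappa : nat -> C,
    l2seq varkappa /\ l2seq kappa /\
    forall n : nat, (1 <= n)%nat ->
      rho lam n = (RtoC (INR n - INR p - 1) + varkappa n)%C /\
      alpha n = (RtoC (2 / PI) + kappa n)%C.

Definition xi (p : nat) (lam alpha : nat -> C) (n : nat) : R :=
  Cmod (rho lam n - RtoC (rhot p n)) + Cmod (alpha n - RtoC (alphat p n)).

Definition in_BOmega (p : nat) (Omega : R) (lam alpha : nat -> C) : Prop :=
  in_Sp p lam alpha /\
  ex_series (fun j => xi p lam alpha (S j) ^ 2) /\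
  sqrt (Series (fun j => xi p lam alpha (S j) ^ 2)) <= Omega.

Definition Dt (x : R) (l m : C) : C :=
  @RInt C_R_CompleteNormedModule
    (fun t => (ccos (csqrt l * RtoC t) * ccos (csqrt m * RtoC t))%C) 0 x.

(* d/d rho [ D~(x, rho^2, mu) ] evaluated at rho = r :
   int_0^x (- t sin(r t)) cos(sqrt(mu) t) dt *)
Definition dDt (x : R) (r m : C) : C :=
  @RInt C_R_CompleteNormedModule
    (fun t => (RtoC (- t) * csin (r * RtoC t) * ccos (csqrt m * RtoC t))%C) 0 x.

Definition Qt (p : nat) (lam alpha : nat -> C) (x : R) (n : nat) (i : bool) (k : nat) (j : bool) : C :=
  (alphai p alpha k j * Dt x (lami p lam n i) (lami p lam k j))%C.

Definition Qmat (p : nat) (lam alpha : nat -> C) (x : R) (n k : nat) : mat2 :=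
  ((Qt p lam alpha x n false k false, (- Qt p lam alpha x n false k true)%C),
   (Qt p lam alpha x n true k false, (- Qt p lam alpha x n true k true)%C)).

Definition Tinv (p : nat) (lam : nat -> C) (k : nat) : mat2 :=
  ((rhohat p lam k, RtoC 1), (RtoC 0, RtoC 1)).

(* T_n, used only when rhohat_n <> 0 *)
Definition Tmat (p : nat) (lam : nat -> C) (n : nat) : mat2 :=
  ((Cinv (rhohat p lam n), (- Cinv (rhohat p lam n))%C), (RtoC 0, RtoC 1)).

Definition rhohat_is0 (p : nat) (lam : nat -> C) (n : nat) : bool :=
  if Req_EM_T (Cmod (rhohat p lam n)) 0 then true else false.

Definition Hmat (p : nat) (lam alpha : nat -> C) (x : R) (n k : nat) : mat2 :=
  if rhohat_is0 p lam n then
    mm (((alphai p alpha k false * dDt x (rho lam n) (lami p lam k false))%C,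
         (- (alphai p alpha k true * dDt x (rho lam n) (lami p lam k true)))%C),
        (Qt p lam alpha x n true k false, (- Qt p lam alpha x n true k true)%C))
       (Tinv p lam k)
  else mm (mm (Tmat p lam n) (Qmat p lam alpha x n k)) (Tinv p lam k).

Definition psit (p : nat) (lam : nat -> C) (x : R) (n : nat) : vec2 :=
  if rhohat_is0 p lam n then
    ((RtoC (- x) * csin (RtoC (rhot p n) * RtoC x))%C, ccos (RtoC (rhot p n) * RtoC x))
  else mv (Tmat p lam n) (ccos (rhoi p lam n false * RtoC x), ccos (rhoi p lam n true * RtoC x)).

Definition bounded_seq (a : nat -> vec2) : Prop :=
  exists M : R, forall n : nat, (1 <= n)%nat ->
    Cmod (fst (a n)) <= M /\ Cmod (snd (a n)) <= M.

(* ((E + H~(x)) a) = f, i.e. for every n >= 1 the series sum_{k>=1} H~_{nk}(x) a_k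
   converges (componentwise) and a_n + sum_{k>=1} H~_{nk}(x) a_k = f_n. *)
Definition EpH_eq (p : nat) (lam alpha : nat -> C) (x : R) (a f : nat -> vec2) : Prop :=
  forall n : nat, (1 <= n)%nat ->
    @is_series _ C_R_NormedModule
      (fun j => fst (mv (Hmat p lam alpha x n (S j)) (a (S j)))) (fst (f n) - fst (a n))%C /\
    @is_series _ C_R_NormedModule
      (fun j => snd (mv (Hmat p lam alpha x n (S j)) (a (S j)))) (snd (f n) - snd (a n))%C.

(* E + H~(x) is a (well-defined) operator on m, it is invertible on m, and the
   inverse has operator norm <= K (sup norms: ||a|| <= K ||(E+H~)a||). *)
Definition EpH_invertible_bounded (p : nat) (lam alpha : nat -> C) (x K : R) : Prop :=
  (forall a, bounded_seq a -> exists f, bounded_seq f /\ EpH_eq p lam alpha x a f) /\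
  (forall f, bounded_seq f -> exists a, bounded_seq a /\ EpH_eq p lam alpha x a f) /\
  (forall a f, bounded_seq a -> EpH_eq p lam alpha x a f ->
     forall M : R, (forall n : nat, (1 <= n)%nat ->
                      Cmod (fst (f n)) <= M /\ Cmod (snd (f n)) <= M) ->
     forall n : nat, (1 <= n)%nat ->
       Cmod (fst (a n)) <= K * M /\ Cmod (snd (a n)) <= K * M).

Definition in_BOmegaK (p : nat) (Omega K : R) (lam alpha : nat -> C) : Prop :=
  in_BOmega p Omega lam alpha /\
  forall x : R, 0 <= x <= PI -> EpH_invertible_bounded p lam alpha x K.

(* g_n = (Q~(x) T^{-1} psi)_n = sum_{k>=1} Q~_{nk}(x) T_k^{-1} psi_k, given as limits *)
Definition g_eq (p : nat) (lam alpha : nat -> C) (x : R) (psi g : nat -> vec2) : Prop :=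
  forall n : nat, (1 <= n)%nat ->
    @is_series _ C_R_NormedModule
      (fun j => fst (mv (Qmat p lam alpha x n (S j)) (mv (Tinv p lam (S j)) (psi (S j))))) (fst (g n)) /\
    @is_series _ C_R_NormedModule
      (fun j => snd (mv (Qmat p lam alpha x n (S j)) (mv (Tinv p lam (S j)) (psi (S j))))) (snd (g n)).

(* Main.v *)
Require Import Defs.
From Stdlib Require Import Reals.
From Stdlib Require Import Lra Lia Psatz.
From Coquelicot Require Import Coquelicot.
Open Scope R_scope.

Lemma between_abs (a c : R) : Rmin 0 a <= c <= Rmax 0 a -> Rabs c <= Rabs a.
Proof.
  unfold Rmin, Rmax; destruct (Rle_dec 0 a); intros [H1 H2];
  unfold Rabs; repeat destruct Rcase_abs; lra.
Qed.

Lemma mvt_bound (f df : R -> R) (a b M : R) :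
  (forall s, Rmin a b <= s <= Rmax a b -> is_derive f s (df s)) ->
  (forall s, Rmin a b <= s <= Rmax a b -> Rabs (df s) <= M) ->
  Rabs (f b - f a) <= M * Rabs (b - a).
Proof.
  intros Hd Hb.
  destruct (MVT_gen f a b df) as [c [Hc Heq]].
  - intros s Hs; apply Hd; lra.
  - intros s Hs. apply continuity_pt_filterlim.
    apply (ex_derive_continuous f s). eexists; apply Hd; exact Hs.
  - rewrite Heq, Rabs_mult. apply Rmult_le_compat_r; [apply Rabs_pos|]. apply Hb; exact Hc.
Qed.

Lemma exp_le_mono (a b : R) : a <= b -> exp a <= exp b.
Proof. intros H; destruct (Req_dec a b); [subst; lra|]. left; apply exp_increasing; lra. Qed.

Lemma sin_lip (a b : R) : Rabs (sin a - sin b) <= Rabs (a - b).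
Proof.
  rewrite <- (Rmult_1_l (Rabs (a - b))).
  apply (mvt_bound sin cos b a 1).
  - intros s _; apply is_derive_sin.
  - intros s _; apply Rabs_le; pose proof (COS_bound s); lra.
Qed.

Lemma cos_lip (a b : R) : Rabs (cos a - cos b) <= Rabs (a - b).
Proof.
  rewrite <- (Rmult_1_l (Rabs (a - b))).
  apply (mvt_bound cos (fun s => - sin s) b a 1).
  - intros s _; apply is_derive_cos.
  - intros s _; apply Rabs_le; pose proof (SIN_bound s); lra.
Qed.

Lemma sq_abs' (v : R) : Rabs v ^ 2 = v ^ 2.
Proof. apply pow2_abs. Qed.
Lemma sq_abs (v : R) : v ^ 2 = Rabs v * Rabs v.
Proof. rewrite <- Rabs_mult. rewrite Rabs_right; [ring|]. nra. Qed.

Lemma cos_taylor2 (u v : R) : Rabs (cos (u + v) - cos u + v * sin u) <= v ^ 2.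
Proof.
  assert (H := mvt_bound (fun s => cos (u + s) + s * sin u)
            (fun s => - sin (u + s) + sin u) 0 v (Rabs v)).
  replace (cos (u + v) - cos u + v * sin u) with
    ((cos (u + v) + v * sin u) - (cos (u + 0) + 0 * sin u)) by (rewrite Rplus_0_r; ring).
  rewrite sq_abs. replace (Rabs v) with (Rabs (v - 0)) at 2 by (f_equal; ring).
  apply H.
  - intros s _. auto_derive; auto. ring.
  - intros s Hs. apply between_abs in Hs.
    replace (- sin (u + s) + sin u) with (sin u - sin (u + s)) by ring.
    eapply Rle_trans; [apply sin_lip|]. replace (u - (u + s)) with (- s) by ring.
    rewrite Rabs_Ropp; exact Hs.
Qed.

Lemma cosh_bound (s : R) : Rabs (cosh s) <= exp (Rabs s).
Proof.
  unfold cosh. pose proof (exp_pos s); pose proof (exp_pos (-s)).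
  assert (exp s <= exp (Rabs s)) by (apply exp_le_mono; apply Rle_abs).
  assert (exp (-s) <= exp (Rabs s)) by (apply exp_le_mono; rewrite <- Rabs_Ropp; apply Rle_abs).
  rewrite Rabs_right; lra.
Qed.

Lemma sinh_bound (s : R) : Rabs (sinh s) <= exp (Rabs s).
Proof.
  unfold sinh. pose proof (exp_pos s); pose proof (exp_pos (-s)).
  assert (exp s <= exp (Rabs s)) by (apply exp_le_mono; apply Rle_abs).
  assert (exp (-s) <= exp (Rabs s)) by (apply exp_le_mono; rewrite <- Rabs_Ropp; apply Rle_abs).
  apply Rabs_le; lra.
Qed.

Lemma is_derive_sinh (s : R) : is_derive sinh s (cosh s).
Proof. unfold sinh, cosh. auto_derive; auto. lra. Qed.
Lemma is_derive_cosh (s : R) : is_derive cosh s (sinh s).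
Proof. unfold sinh, cosh. auto_derive; auto. lra. Qed.

Lemma sinh_lin (y : R) : Rabs (sinh y) <= exp (Rabs y) * Rabs y.
Proof.
  replace (sinh y) with (sinh y - sinh 0) by (unfold sinh; rewrite Ropp_0, exp_0; field).
  replace (Rabs y) with (Rabs (y - 0)) at 2 by (f_equal; ring).
  apply (mvt_bound sinh cosh 0 y).
  - intros s _; apply is_derive_sinh.
  - intros s Hs. apply between_abs in Hs. eapply Rle_trans; [apply cosh_bound|].
    apply exp_le_mono; exact Hs.
Qed.

Lemma cosh_lin (y : R) : Rabs (cosh y - 1) <= exp (Rabs y) * Rabs y.
Proof.
  replace (cosh y - 1) with (cosh y - cosh 0) by (unfold cosh; rewrite Ropp_0, exp_0; field).
  replace (Rabs y) with (Rabs (y - 0)) at 2 by (f_equal; ring).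
  apply (mvt_bound cosh sinh 0 y).
  - intros s _; apply is_derive_cosh.
  - intros s Hs. apply between_abs in Hs. eapply Rle_trans; [apply sinh_bound|].
    apply exp_le_mono; exact Hs.
Qed.

Lemma cosh_quad (y : R) : Rabs (cosh y - 1) <= exp (Rabs y) * y ^ 2.
Proof.
  replace (cosh y - 1) with (cosh y - cosh 0) by (unfold cosh; rewrite Ropp_0, exp_0; field).
  rewrite sq_abs, <- Rmult_assoc.
  replace (Rabs y) with (Rabs (y - 0)) at 3 by (f_equal; ring).
  apply (mvt_bound cosh sinh 0 y).
  - intros s _; apply is_derive_cosh.
  - intros s Hs. apply between_abs in Hs. eapply Rle_trans; [apply sinh_lin|].
    apply Rmult_le_compat; try apply Rabs_pos; [left; apply exp_pos| |exact Hs].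
    apply exp_le_mono; exact Hs.
Qed.

Lemma sinh_quad (y : R) : Rabs (sinh y - y) <= exp (Rabs y) * y ^ 2.
Proof.
  replace (sinh y - y) with ((sinh y - y) - (sinh 0 - 0)) by (unfold sinh; rewrite Ropp_0, exp_0; field).
  rewrite sq_abs, <- Rmult_assoc.
  replace (Rabs y) with (Rabs (y - 0)) at 3 by (f_equal; ring).
  apply (mvt_bound (fun s => sinh s - s) (fun s => cosh s - 1) 0 y).
  - intros s _. unfold sinh, cosh. auto_derive; auto. lra.
  - intros s Hs. apply between_abs in Hs. eapply Rle_trans; [apply cosh_lin|].
    apply Rmult_le_compat; try apply Rabs_pos; [left; apply exp_pos| |exact Hs].
    apply exp_le_mono; exact Hs.
Qed.

Lemma exp_ge1 (a : R) : 0 <= a -> 1 <= exp a.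
Proof. intros H. rewrite <- exp_0. apply exp_le_mono; lra. Qed.

Lemma abs_mul_le (a b A B : R) : Rabs a <= A -> Rabs b <= B -> Rabs (a * b) <= A * B.
Proof. intros. rewrite Rabs_mult. apply Rmult_le_compat; auto using Rabs_pos. Qed.

Lemma abs_t_bound (d t Om : R) : Rabs d <= Om -> 0 <= t <= PI -> Rabs (d * t) <= PI * Om.
Proof. intros Hd Ht. rewrite Rabs_mult, (Rabs_right t) by lra. pose proof (Rabs_pos d). nra. Qed.

Lemma sq_t_bound (d t : R) : 0 <= t <= PI -> (d * t) ^ 2 <= PI ^ 2 * d ^ 2.
Proof. intros Ht. replace ((d * t) ^ 2) with (d ^ 2 * t ^ 2) by ring.
  assert (0 <= d ^ 2) by apply pow2_ge_0. assert (t ^ 2 <= PI ^ 2) by (apply pow_incr; lra). nra. Qed.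

Lemma rem_re (r d1 d2 t Om : R) : Rabs d1 <= Om -> Rabs d2 <= Om -> 0 <= t <= PI ->
  Rabs (cos ((r + d1) * t) * cosh (d2 * t) - cos (r * t) + d1 * t * sin (r * t))
  <= 2 * PI ^ 2 * exp (PI * Om) * (d1 ^ 2 + d2 ^ 2).
Proof.
  intros H1 H2 Ht. set (E := exp (PI * Om)).
  assert (HE : 1 <= E) by (apply exp_ge1; pose proof (Rabs_pos d1); pose proof PI_RGT_0; nra).
  replace (cos ((r + d1) * t) * cosh (d2 * t) - cos (r * t) + d1 * t * sin (r * t)) with
    (cos ((r + d1) * t) * (cosh (d2 * t) - 1) + (cos (r * t + d1 * t) - cos (r * t) + (d1 * t) * sin (r * t)))
    by (replace ((r + d1) * t) with (r * t + d1 * t) by ring; ring).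
  eapply Rle_trans; [apply Rabs_triang|].
  assert (A1 : Rabs (cos ((r + d1) * t) * (cosh (d2 * t) - 1)) <= 1 * (E * (PI ^ 2 * d2 ^ 2))).
  { apply abs_mul_le. apply Rabs_le; pose proof (COS_bound ((r + d1) * t)); lra.
    eapply Rle_trans; [apply cosh_quad|]. apply Rmult_le_compat.
    - left; apply exp_pos.
    - apply pow2_ge_0.
    - apply exp_le_mono. apply abs_t_bound; auto.
    - apply sq_t_bound; auto. }
  assert (A2 : Rabs (cos (r * t + d1 * t) - cos (r * t) + (d1 * t) * sin (r * t)) <= PI ^ 2 * d1 ^ 2).
  { eapply Rle_trans; [apply cos_taylor2|]. apply sq_t_bound; auto. }
  assert (0 <= PI ^ 2 * d1 ^ 2) by (apply Rmult_le_pos; apply pow2_ge_0).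
  assert (0 <= PI ^ 2 * d2 ^ 2) by (apply Rmult_le_pos; apply pow2_ge_0).
  nra.
Qed.

Lemma rem_im (r d1 d2 t Om : R) : Rabs d1 <= Om -> Rabs d2 <= Om -> 0 <= t <= PI ->
  Rabs (- (sin ((r + d1) * t) * sinh (d2 * t)) + d2 * t * sin (r * t))
  <= 2 * PI ^ 2 * exp (PI * Om) * (d1 ^ 2 + d2 ^ 2).
Proof.
  intros H1 H2 Ht. set (E := exp (PI * Om)).
  assert (HE : 1 <= E) by (apply exp_ge1; pose proof (Rabs_pos d1); pose proof PI_RGT_0; nra).
  replace (- (sin ((r + d1) * t) * sinh (d2 * t)) + d2 * t * sin (r * t)) with
    (- (sin ((r + d1) * t) * (sinh (d2 * t) - d2 * t)) - (d2 * t) * (sin ((r + d1) * t) - sin (r * t)))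
    by ring.
  eapply Rle_trans; [apply Rabs_triang|]. rewrite Rabs_Ropp, Rabs_Ropp.
  assert (A1 : Rabs (sin ((r + d1) * t) * (sinh (d2 * t) - d2 * t)) <= 1 * (E * (PI ^ 2 * d2 ^ 2))).
  { apply abs_mul_le. apply Rabs_le; pose proof (SIN_bound ((r + d1) * t)); lra.
    eapply Rle_trans; [apply sinh_quad|]. apply Rmult_le_compat.
    - left; apply exp_pos.
    - apply pow2_ge_0.
    - apply exp_le_mono. apply abs_t_bound; auto.
    - apply sq_t_bound; auto. }
  assert (A2 : Rabs ((d2 * t) * (sin ((r + d1) * t) - sin (r * t))) <= Rabs (d2 * t) * Rabs (d1 * t)).
  { rewrite Rabs_mult. apply Rmult_le_compat_l; [apply Rabs_pos|].
    eapply Rle_trans; [apply sin_lip|]. right; f_equal; ring. }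
  assert (A3 : Rabs (d2 * t) * Rabs (d1 * t) <= PI ^ 2 * (d1 ^ 2 + d2 ^ 2)).
  { rewrite <- Rabs_mult. assert ((d2 * t * (d1 * t)) ^ 2 <= (PI ^ 2 * (d1 ^ 2 + d2 ^ 2)) ^ 2).
    { replace ((d2 * t * (d1 * t)) ^ 2) with ((d1 * t) ^ 2 * (d2 * t) ^ 2) by ring.
      pose proof (sq_t_bound d1 t Ht); pose proof (sq_t_bound d2 t Ht).
      assert (0 <= (d1 * t) ^ 2) by apply pow2_ge_0. assert (0 <= (d2 * t) ^ 2) by apply pow2_ge_0.
      assert (0 <= d1 ^ 2) by apply pow2_ge_0. assert (0 <= d2 ^ 2) by apply pow2_ge_0.
      assert (0 <= PI ^ 2) by apply pow2_ge_0. nra. }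
    apply Rsqr_incr_0_var.
    - rewrite !Rsqr_pow2. rewrite <- (sq_abs' (d2 * t * (d1 * t))) in H. exact H.
    - assert (0 <= PI ^ 2) by apply pow2_ge_0. assert (0 <= d1 ^ 2) by apply pow2_ge_0.
      assert (0 <= d2 ^ 2) by apply pow2_ge_0. nra. }
  assert (0 <= PI ^ 2 * d1 ^ 2) by (apply Rmult_le_pos; apply pow2_ge_0).
  assert (0 <= PI ^ 2 * d2 ^ 2) by (apply Rmult_le_pos; apply pow2_ge_0).
  nra.
Qed.

Fixpoint fs (f : nat -> R) (n : nat) : R :=
  match n with O => 0 | S n => fs f n + f n end.

Lemma fs_ext f g n : (forall j, (j < n)%nat -> f j = g j) -> fs f n = fs g n.
Proof. induction n; simpl; intros H; auto. rewrite IHn by (intros; apply H; lia). rewrite H by lia; auto. Qed.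

Lemma fs_plus f g n : fs (fun j => f j + g j) n = fs f n + fs g n.
Proof. induction n; simpl; [ring|rewrite IHn; ring]. Qed.
Lemma fs_scal c f n : fs (fun j => c * f j) n = c * fs f n.
Proof. induction n; simpl; [ring|rewrite IHn; ring]. Qed.
Lemma fs_const c n : fs (fun _ => c) n = INR n * c.
Proof. induction n; simpl fs; [simpl; ring|rewrite IHn, S_INR; ring]. Qed.
Lemma fs_le f g n : (forall j, (j < n)%nat -> f j <= g j) -> fs f n <= fs g n.
Proof. induction n; simpl; intros H; [lra|]. assert (f n <= g n) by (apply H; lia). assert (fs f n <= fs g n) by (apply IHn; intros; apply H; lia). lra. Qed.
Lemma fs_ge0 f n : (forall j, (j < n)%nat -> 0 <= f j) -> 0 <= fs f n.
Proof. intros H. replace 0 with (fs (fun _ => 0) n). apply fs_le; auto. rewrite fs_const; ring. Qed.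
Lemma fs_split f a b : fs f (a + b) = fs f a + fs (fun j => f (a + j)%nat) b.
Proof. induction b; simpl. rewrite Nat.add_0_r; ring. rewrite Nat.add_succ_r; simpl. rewrite IHb; ring. Qed.
Lemma fs_shift f n : fs f (S n) = f O + fs (fun j => f (S j)) n.
Proof. replace (S n) with (1 + n)%nat by lia. rewrite fs_split. simpl. ring. Qed.
Lemma fs_mono f a b : (a <= b)%nat -> (forall j, 0 <= f j) -> fs f a <= fs f b.
Proof. intros Hab H. replace b with (a + (b - a))%nat by lia. rewrite fs_split.
  assert (0 <= fs (fun j => f (a + j)%nat) (b - a)) by (apply fs_ge0; auto). lra. Qed.
Lemma fs_term f n j : (j < n)%nat -> (forall j, 0 <= f j) -> f j <= fs f n.
Proof. intros Hj H. replace n with (S j + (n - S j))%nat by lia. rewrite fs_split. simpl.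
  assert (0 <= fs f j) by (apply fs_ge0; auto).
  assert (0 <= fs (fun j0 => f (S (j + j0))) (n - S j)) by (apply fs_ge0; auto). lra. Qed.
Lemma fs_abs f n : Rabs (fs f n) <= fs (fun j => Rabs (f j)) n.
Proof. induction n; simpl. rewrite Rabs_R0; lra. eapply Rle_trans; [apply Rabs_triang|]. lra. Qed.

Definition cont (f : R -> R) : Prop := forall t, continuous f t.

Lemma cont_plus f g : cont f -> cont g -> cont (fun t => f t + g t).
Proof. intros Hf Hg t; apply (continuous_plus f g); auto. Qed.
Lemma cont_mult f g : cont f -> cont g -> cont (fun t => f t * g t).
Proof. intros Hf Hg t; apply (continuous_mult f g); auto. Qed.
Lemma cont_const c : cont (fun _ => c).
Proof. intros t; apply continuous_const. Qed.
Lemma cont_id : cont (fun t => t).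
Proof. intros t; apply continuous_id. Qed.
Lemma cont_ext f g : (forall t, f t = g t) -> cont f -> cont g.
Proof. intros H Hf t. apply (continuous_ext f); auto. Qed.
Lemma cont_opp f : cont f -> cont (fun t => - f t).
Proof. intros Hf. apply (cont_ext (fun t => (-1) * f t)); [intros; ring|]. apply cont_mult; auto using cont_const. Qed.
Lemma cont_minus f g : cont f -> cont g -> cont (fun t => f t - g t).
Proof. intros. apply cont_plus; auto using cont_opp. Qed.
Lemma cont_fs (f : nat -> R -> R) n : (forall j, cont (f j)) -> cont (fun t => fs (fun j => f j t) n).
Proof. intros H; induction n; simpl. apply cont_const. apply cont_plus; auto. Qed.
Lemma cont_cos a : cont (fun t => cos (a * t)).
Proof. intros t. apply (@ex_derive_continuous R_AbsRing R_NormedModule). auto_derive; auto. Qed.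
Lemma cont_sin a : cont (fun t => sin (a * t)).
Proof. intros t. apply (@ex_derive_continuous R_AbsRing R_NormedModule). auto_derive; auto. Qed.
Lemma cont_cosh a : cont (fun t => cosh (a * t)).
Proof. intros t. apply (@ex_derive_continuous R_AbsRing R_NormedModule). unfold cosh. auto_derive; auto. Qed.
Lemma cont_sinh a : cont (fun t => sinh (a * t)).
Proof. intros t. apply (@ex_derive_continuous R_AbsRing R_NormedModule). unfold sinh. auto_derive; auto. Qed.
Lemma cont_sq f : cont f -> cont (fun t => f t ^ 2).
Proof. intros. apply (cont_ext (fun t => f t * f t)); [intros; ring|]. apply cont_mult; auto. Qed.

Hint Resolve cont_plus cont_mult cont_const cont_id cont_opp cont_minus cont_fs cont_cos cont_sin cont_cosh cont_sinh cont_sq : cont.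

Definition RI (f : R -> R) (a b : R) : R := RInt f a b.

Lemma exRI f a b : cont f -> ex_RInt f a b.
Proof. intros H. apply (@ex_RInt_continuous R_CompleteNormedModule). intros; apply H. Qed.

Lemma RI_ext (f g : R -> R) a b : (forall t, Rmin a b <= t <= Rmax a b -> f t = g t) -> RI f a b = RI g a b.
Proof. unfold RI. intros H; apply RInt_ext; intros; apply H; lra. Qed.
Lemma RI_plus f g a b : cont f -> cont g -> RI (fun t => f t + g t) a b = RI f a b + RI g a b.
Proof. unfold RI. intros. apply (RInt_plus f g); apply exRI; auto. Qed.
Lemma RI_scal c f a b : cont f -> RI (fun t => c * f t) a b = c * RI f a b.
Proof. unfold RI. intros. apply (RInt_scal f a b c); apply exRI; auto. Qed.
Lemma RI_opp f a b : cont f -> RI (fun t => - f t) a b = - RI f a b.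
Proof. intros. transitivity (RI (fun t => (-1) * f t) a b).
  apply RI_ext; intros; ring. rewrite RI_scal by auto. ring. Qed.
Lemma RI_minus f g a b : cont f -> cont g -> RI (fun t => f t - g t) a b = RI f a b - RI g a b.
Proof. intros. unfold Rminus. rewrite <- RI_opp; auto. apply RI_plus; auto with cont. Qed.
Lemma RI_const c a b : RI (fun _ => c) a b = c * (b - a).
Proof. unfold RI. rewrite RInt_const. simpl. unfold scal; simpl. unfold mult; simpl. ring. Qed.
Lemma RI_fs (f : nat -> R -> R) a b n : (forall j, cont (f j)) ->
  RI (fun t => fs (fun j => f j t) n) a b = fs (fun j => RI (f j) a b) n.
Proof. intros H; induction n; simpl.
  - rewrite RI_const. ring.
  - rewrite RI_plus; auto with cont. rewrite IHn; auto.
Qed.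
Lemma RI_le f g a b : a <= b -> cont f -> cont g -> (forall t, a <= t <= b -> f t <= g t) ->
  RI f a b <= RI g a b.
Proof. unfold RI. intros. apply RInt_le; auto using exRI. intros; apply H2; lra. Qed.
Lemma RI_ge0 f a b : a <= b -> cont f -> (forall t, a <= t <= b -> 0 <= f t) -> 0 <= RI f a b.
Proof. unfold RI. intros. apply RInt_ge_0; auto using exRI. intros; apply H1; lra. Qed.
Lemma RI_sub_interval f x y : 0 <= x <= y -> cont f -> (forall t, 0 <= t <= y -> 0 <= f t) ->
  RI f 0 x <= RI f 0 y.
Proof. intros Hx Hf Hp. unfold RI. rewrite <- (RInt_Chasles f 0 x y) by (apply exRI; auto).
  assert (0 <= RI f x y) by (apply RI_ge0; [lra|auto|intros; apply Hp; lra]).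
  unfold RI in H. simpl. unfold plus; simpl. lra. Qed.
Lemma RI_derive (F f : R -> R) a b : (forall t, is_derive F t (f t)) -> cont f ->
  RI f a b = F b - F a.
Proof.
  intros Hd Hc. unfold RI. apply is_RInt_unique.
  apply (is_RInt_derive F f a b); intros; auto.
Qed.
Lemma RI_bound f a b M : a <= b -> cont f -> (forall t, a <= t <= b -> f t <= M) -> RI f a b <= M * (b - a).
Proof. intros. rewrite <- RI_const. apply RI_le; auto with cont. Qed.
Lemma fs_mult_r f n c : fs f n * c = fs (fun j => f j * c) n.
Proof. induction n; simpl; [ring|rewrite <- IHn; ring]. Qed.
Lemma fs_minus f g n : fs (fun j => f j - g j) n = fs f n - fs g n.
Proof. induction n; simpl; [ring|rewrite IHn; ring]. Qed.

Lemma sin_nat_PI m : sin (INR m * PI) = 0.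
Proof. apply sin_eq_0_1. exists (Z.of_nat m). rewrite INR_IZR_INZ; auto. Qed.

Lemma INR_sq_neq m m' : m <> m' -> INR m ^ 2 - INR m' ^ 2 <> 0.
Proof.
  intros H. pose proof (pos_INR m); pose proof (pos_INR m').
  assert (INR m <> INR m') by (intro E; apply INR_eq in E; auto).
  replace (INR m ^ 2 - INR m' ^ 2) with ((INR m - INR m') * (INR m + INR m')) by ring.
  apply Rmult_integral_contrapositive; split; [lra|].
  destruct (Req_dec (INR m + INR m') 0); [|auto]. exfalso; apply H2; lra.
Qed.

Lemma orth_cc m m' : m <> m' ->
  RI (fun t => cos (INR m * t) * cos (INR m' * t)) 0 PI = 0.
Proof.
  intros H. pose proof (INR_sq_neq m m' H) as Hn.
  set (a := INR m) in *; set (b := INR m') in *.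
  rewrite (RI_derive (fun t => (a * sin (a * t) * cos (b * t) - b * cos (a * t) * sin (b * t)) / (a ^ 2 - b ^ 2))).
  - unfold a, b. rewrite !Rmult_0_r, sin_0, (Rmult_comm (INR m) PI), (Rmult_comm (INR m') PI).
    rewrite <- (Rmult_comm (INR m)), <- (Rmult_comm (INR m')), !sin_nat_PI. field. exact Hn.
  - intros t. auto_derive; [auto|]. field. replace (a * a - b * b) with (a ^ 2 - b ^ 2) by ring. exact Hn.
  - auto with cont.
Qed.

Lemma orth_ss m m' : m <> m' ->
  RI (fun t => sin (INR m * t) * sin (INR m' * t)) 0 PI = 0.
Proof.
  intros H. pose proof (INR_sq_neq m m' H) as Hn.
  set (a := INR m) in *; set (b := INR m') in *.
  rewrite (RI_derive (fun t => (b * sin (a * t) * cos (b * t) - a * cos (a * t) * sin (b * t)) / (a ^ 2 - b ^ 2))).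
  - unfold a, b. rewrite !Rmult_0_r, sin_0, (Rmult_comm (INR m) PI), (Rmult_comm (INR m') PI).
    rewrite <- (Rmult_comm (INR m)), <- (Rmult_comm (INR m')), !sin_nat_PI. field. exact Hn.
  - intros t. auto_derive; [auto|]. field. replace (a * a - b * b) with (a ^ 2 - b ^ 2) by ring. exact Hn.
  - auto with cont.
Qed.

Lemma orth_gram (phi : nat -> R -> R) :
  (forall j, cont (phi j)) ->
  (forall i j, i <> j -> RI (fun t => phi i t * phi j t) 0 PI = 0) ->
  (forall j t, phi j t ^ 2 <= 1) ->
  forall d L, RI (fun t => (fs (fun j => d j * phi j t) L) ^ 2) 0 PI <= PI * fs (fun j => d j ^ 2) L.
Proof.
  intros Hc Ho Hd d L. pose proof PI_RGT_0.
  induction L.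
  - simpl. rewrite (RI_ext _ (fun _ => 0)) by (intros; ring). rewrite RI_const. lra.
  - cbn [fs].
    set (V := fun t => fs (fun j => d j * phi j t) L).
    assert (HV : cont V) by (unfold V; auto with cont).
    rewrite (RI_ext _ (fun t => V t ^ 2 + (2 * d L * (V t * phi L t) + d L ^ 2 * phi L t ^ 2)))
      by (intros; unfold V; ring).
    rewrite RI_plus, RI_plus, RI_scal, RI_scal by auto with cont.
    assert (E : RI (fun t => V t * phi L t) 0 PI = 0).
    { rewrite (RI_ext _ (fun t => fs (fun j => d j * (phi j t * phi L t)) L)).
      2:{ intros; unfold V; rewrite fs_mult_r; apply fs_ext; intros; ring. }
      rewrite RI_fs by (intros; auto with cont).
      rewrite (fs_ext _ (fun _ => 0)). rewrite fs_const; ring.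
      intros j Hj. rewrite RI_scal by auto with cont. rewrite Ho by lia. ring. }
    rewrite E.
    assert (RI (fun t => phi L t ^ 2) 0 PI <= 1 * (PI - 0)) by (apply RI_bound; auto with cont; lra).
    assert (0 <= d L ^ 2) by nra.
    unfold V. nra.
Qed.

Lemma bessel (phi : nat -> R -> R) L C x : 0 < C -> 0 <= x ->
  (forall j, cont (phi j)) ->
  (forall d, RI (fun t => (fs (fun j => d j * phi j t) L) ^ 2) 0 x <= C * fs (fun j => d j ^ 2) L) ->
  forall h, cont h ->
  fs (fun j => (RI (fun t => phi j t * h t) 0 x) ^ 2) L <= C * RI (fun t => h t ^ 2) 0 x.
Proof.
  intros HC Hx Hc Hg h Hh.
  set (e := fun j => RI (fun t => phi j t * h t) 0 x).
  set (P := fun t => fs (fun j => e j * phi j t) L).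
  assert (HP : cont P) by (unfold P; auto with cont).
  assert (HS : fs (fun j => e j ^ 2) L = RI (fun t => P t * h t) 0 x).
  { rewrite (RI_ext _ (fun t => fs (fun j => e j * (phi j t * h t)) L)).
    2:{ intros; unfold P; rewrite fs_mult_r; apply fs_ext; intros; ring. }
    rewrite RI_fs by (intros; auto with cont). apply fs_ext; intros.
    rewrite RI_scal by auto with cont. unfold e. ring. }
  assert (H0 : 0 <= RI (fun t => (P t - C * h t) ^ 2) 0 x).
  { apply RI_ge0; auto with cont. intros; apply pow2_ge_0. }
  rewrite (RI_ext _ (fun t => P t ^ 2 + ((-2 * C) * (P t * h t) + C ^ 2 * h t ^ 2))) in H0
    by (intros; ring).
  rewrite RI_plus, RI_plus, RI_scal, RI_scal in H0 by auto with cont.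
  assert (HG := Hg e). change (RI (fun t => P t ^ 2) 0 x <= C * fs (fun j => e j ^ 2) L) in HG.
  rewrite <- HS in H0.
  change (fs (fun j => e j ^ 2) L <= C * RI (fun t => h t ^ 2) 0 x).
  assert (0 <= fs (fun j => e j ^ 2) L) by (apply fs_ge0; intros; apply pow2_ge_0).
  assert (0 <= RI (fun t => h t ^ 2) 0 x) by (apply RI_ge0; auto with cont; intros; apply pow2_ge_0).
  set (S := fs (fun j => e j ^ 2) L) in *.
  set (H2 := RI (fun t => h t ^ 2) 0 x) in *.
  set (PP := RI (fun t => P t ^ 2) 0 x) in *.
  nra.
Qed.

Lemma gram_of_bessel (phi : nat -> R -> R) L C x : 0 < C -> 0 <= x ->
  (forall j, cont (phi j)) ->
  (forall h, cont h ->
    fs (fun j => (RI (fun t => phi j t * h t) 0 x) ^ 2) L <= C * RI (fun t => h t ^ 2) 0 x) ->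
  forall d, RI (fun t => (fs (fun j => d j * phi j t) L) ^ 2) 0 x <= C * fs (fun j => d j ^ 2) L.
Proof.
  intros HC Hx Hc Hb d.
  set (V := fun t => fs (fun j => d j * phi j t) L).
  assert (HV : cont V) by (unfold V; auto with cont).
  set (e := fun j => RI (fun t => phi j t * V t) 0 x).
  assert (E : RI (fun t => V t ^ 2) 0 x = fs (fun j => d j * e j) L).
  { rewrite (RI_ext _ (fun t => fs (fun j => d j * (phi j t * V t)) L)).
    2:{ intros. transitivity (V t * V t); [ring|]. unfold V at 1. rewrite fs_mult_r.
        apply fs_ext; intros; ring. }
    rewrite RI_fs by (intros; auto with cont). apply fs_ext; intros.
    rewrite RI_scal by auto with cont. reflexivity. }
  change (RI (fun t => V t ^ 2) 0 x <= C * fs (fun j => d j ^ 2) L). rewrite E.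
  assert (A : fs (fun j => d j * e j) L <= fs (fun j => (C * d j ^ 2 + e j ^ 2 / C) / 2) L).
  { apply fs_le; intros. assert (0 <= (C * d j - e j) ^ 2) by apply pow2_ge_0.
    replace ((C * d j ^ 2 + e j ^ 2 / C) / 2) with (d j * e j + (C * d j - e j) ^ 2 / (2 * C)) by (field; lra).
    assert (0 <= (C * d j - e j) ^ 2 / (2 * C)) by (apply Rdiv_le_0_compat; lra). lra. }
  rewrite (fs_ext (fun j => (C * d j ^ 2 + e j ^ 2 / C) / 2) (fun j => / 2 * C * d j ^ 2 + / (2 * C) * e j ^ 2)) in A
    by (intros; field; lra).
  rewrite fs_plus, !fs_scal in A.
  pose proof (Hb V HV) as B. fold e in B. rewrite E in B.
  assert (/ (2 * C) * fs (fun j => e j ^ 2) L <= / 2 * fs (fun j => d j * e j) L).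
  { apply Rle_trans with (/ (2 * C) * (C * fs (fun j => d j * e j) L)).
    apply Rmult_le_compat_l; [left; apply Rinv_0_lt_compat; lra| exact B]. right; field; lra. }
  lra.
Qed.

Definition phc (m : nat) (t : R) := cos (INR m * t).
Definition phs (m : nat) (t : R) := sin (INR (S m) * t).

Lemma bessel_cos x : 0 <= x <= PI -> forall L h, cont h ->
  fs (fun j => (RI (fun t => phc j t * h t) 0 x) ^ 2) L <= PI * RI (fun t => h t ^ 2) 0 x.
Proof.
  intros Hx L. apply bessel; [apply PI_RGT_0|lra|unfold phc; intros; auto with cont|].
  intros d. eapply Rle_trans; [apply RI_sub_interval with (y := PI)|].
  - lra.
  - intros. apply cont_sq. apply cont_fs. intros j. unfold phc; auto with cont.
  - intros; apply pow2_ge_0.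
  - apply orth_gram.
    + unfold phc; intros; auto with cont.
    + intros i j H. apply orth_cc; auto.
    + intros j t. unfold phc. pose proof (COS_bound (INR j * t)). nra.
Qed.

Lemma bessel_sin x : 0 <= x <= PI -> forall L h, cont h ->
  fs (fun j => (RI (fun t => phs j t * h t) 0 x) ^ 2) L <= PI * RI (fun t => h t ^ 2) 0 x.
Proof.
  intros Hx L. apply bessel; [apply PI_RGT_0|lra|unfold phs; intros; auto with cont|].
  intros d. eapply Rle_trans; [apply RI_sub_interval with (y := PI)|].
  - lra.
  - intros. apply cont_sq. apply cont_fs. intros j. unfold phs; auto with cont.
  - intros; apply pow2_ge_0.
  - apply orth_gram.
    + unfold phs; intros; auto with cont.
    + intros i j H. apply orth_ss; auto.
    + intros j t. unfold phs. pose proof (SIN_bound (INR (S j) * t)). nra.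
Qed.

Lemma rhot_low p j : (j < p + 1)%nat -> rhot p (S j) = 0.
Proof. intros H. unfold rhot. replace (S j <=? p + 1)%nat with true; auto. symmetry; apply Nat.leb_le; lia. Qed.

Lemma rhot_high p j : rhot p (S (p + 1 + j)) = INR (S j).
Proof. unfold rhot. replace (S (p + 1 + j) <=? p + 1)%nat with false.
  rewrite !S_INR, !plus_INR. simpl. ring. symmetry; apply Nat.leb_gt; lia. Qed.

Lemma rhot_ge0 p n : 0 <= rhot p n.
Proof. unfold rhot. destruct (Nat.leb_spec n (p + 1)); [lra|].
  assert (INR (p + 1) < INR n) by (apply lt_INR; lia). rewrite plus_INR in H0. simpl in H0. lra. Qed.

Lemma bessel_rhot p x : 0 <= x <= PI -> forall L h, cont h ->
  fs (fun j => (RI (fun t => cos (rhot p (S j) * t) * h t) 0 x) ^ 2) L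
  <= (INR p + 2) * PI * RI (fun t => h t ^ 2) 0 x.
Proof.
  intros Hx L h Hh.
  set (f := fun j => (RI (fun t => cos (rhot p (S j) * t) * h t) 0 x) ^ 2).
  assert (Hf0 : forall j, 0 <= f j) by (intros; apply pow2_ge_0).
  set (H2 := RI (fun t => h t ^ 2) 0 x).
  assert (HB := bessel_cos x Hx).
  set (f0 := (RI (fun t => phc 0 t * h t) 0 x) ^ 2).
  assert (Hf0b : f0 <= PI * H2).
  { pose proof (HB 1%nat h Hh) as H. cbn [fs] in H. unfold f0, H2. lra. }
  eapply Rle_trans; [apply (fs_mono f L (p + 1 + L)); auto; lia|].
  rewrite fs_split.
  rewrite (fs_ext f (fun _ => f0)).
  2:{ intros j Hj. unfold f, f0, phc. rewrite rhot_low by lia. simpl INR. reflexivity. }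
  rewrite fs_const.
  rewrite (fs_ext (fun j => f (p + 1 + j)%nat) (fun j => (RI (fun t => phc (S j) t * h t) 0 x) ^ 2)).
  2:{ intros j Hj. unfold f, phc. rewrite rhot_high. reflexivity. }
  assert (fs (fun j => (RI (fun t => phc (S j) t * h t) 0 x) ^ 2) L <= PI * H2).
  { eapply Rle_trans; [|apply (HB (S L) h Hh)]. rewrite fs_shift.
    assert (0 <= (RI (fun t => phc 0 t * h t) 0 x) ^ 2) by apply pow2_ge_0. lra. }
  rewrite plus_INR. simpl INR. pose proof PI_RGT_0. pose proof (pos_INR p). nra.
Qed.

Lemma bessel_tsin p x : 0 <= x <= PI -> forall L h, cont h ->
  fs (fun j => (RI (fun t => (t * sin (rhot p (S j) * t)) * h t) 0 x) ^ 2) L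
  <= PI ^ 3 * RI (fun t => h t ^ 2) 0 x.
Proof.
  intros Hx L h Hh.
  set (f := fun j => (RI (fun t => (t * sin (rhot p (S j) * t)) * h t) 0 x) ^ 2).
  assert (Hf0 : forall j, 0 <= f j) by (intros; apply pow2_ge_0).
  eapply Rle_trans; [apply (fs_mono f L (p + 1 + L)); auto; lia|].
  rewrite fs_split.
  rewrite (fs_ext f (fun _ => 0)).
  2:{ intros j Hj. unfold f. rewrite rhot_low by lia.
      rewrite (RI_ext _ (fun _ => 0)) by (intros; rewrite Rmult_0_l, sin_0; ring).
      rewrite RI_const; ring. }
  rewrite fs_const.
  rewrite (fs_ext (fun j => f (p + 1 + j)%nat) (fun j => (RI (fun t => phs j t * (t * h t)) 0 x) ^ 2)).
  2:{ intros j Hj. unfold f, phs. rewrite rhot_high. f_equal. apply RI_ext; intros; ring. }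
  eapply Rle_trans.
  { apply Rplus_le_compat_l. apply (bessel_sin x Hx L (fun t => t * h t)); auto with cont. }
  assert (RI (fun t => (t * h t) ^ 2) 0 x <= RI (fun t => PI ^ 2 * h t ^ 2) 0 x).
  { apply RI_le; [lra|auto with cont|auto with cont|]. intros t Ht.
    assert (0 <= h t ^ 2) by apply pow2_ge_0.
    replace ((t * h t) ^ 2) with (t ^ 2 * h t ^ 2) by ring.
    apply Rmult_le_compat_r; auto. nra. }
  rewrite RI_scal in H by auto with cont. pose proof PI_RGT_0. nra.
Qed.

Lemma gram_rhot p x : 0 <= x <= PI -> forall L d,
  RI (fun t => (fs (fun j => d j * cos (rhot p (S j) * t)) L) ^ 2) 0 x
  <= (INR p + 2) * PI * fs (fun j => d j ^ 2) L.
Proof.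
  intros Hx L. apply (gram_of_bessel (fun j t => cos (rhot p (S j) * t))).
  - pose proof (pos_INR p); pose proof PI_RGT_0; nra.
  - lra.
  - intros; auto with cont.
  - intros; apply bessel_rhot; auto.
Qed.

Lemma gram_tsin p x : 0 <= x <= PI -> forall L d,
  RI (fun t => (fs (fun j => d j * (t * sin (rhot p (S j) * t))) L) ^ 2) 0 x
  <= PI ^ 3 * fs (fun j => d j ^ 2) L.
Proof.
  intros Hx L. apply (gram_of_bessel (fun j t => t * sin (rhot p (S j) * t))).
  - pose proof PI_RGT_0. apply pow_lt; lra.
  - lra.
  - intros; auto with cont.
  - intros; apply bessel_tsin; auto.
Qed.

Fixpoint Cfs (f : nat -> C) (n : nat) : C :=
  match n with O => RtoC 0 | S n => (Cfs f n + f n)%C end.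

Lemma Cfs_fst f n : fst (Cfs f n) = fs (fun j => fst (f j)) n.
Proof. induction n; simpl; auto. rewrite IHn; auto. Qed.
Lemma Cfs_snd f n : snd (Cfs f n) = fs (fun j => snd (f j)) n.
Proof. induction n; simpl; auto. rewrite IHn; auto. Qed.

Lemma sum_n_Cfs (a : nat -> C) N : @sum_n C_R_NormedModule a N = Cfs a (S N).
Proof.
  induction N.
  - rewrite sum_O. simpl. apply injective_projections; simpl; ring.
  - rewrite sum_Sn, IHN. reflexivity.
Qed.

Lemma is_series_Cscal (c : C) (a : nat -> C) l :
  @is_series _ C_R_NormedModule a l ->
  @is_series _ C_R_NormedModule (fun j => (c * a j)%C) (c * l)%C.
Proof. intros H. exact (@is_series_scal C_AbsRing C_NormedModule c a l H). Qed.

Lemma is_series_Cplus (a b : nat -> C) la lb :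
  @is_series _ C_R_NormedModule a la -> @is_series _ C_R_NormedModule b lb ->
  @is_series _ C_R_NormedModule (fun j => (a j + b j)%C) (la + lb)%C.
Proof. intros Ha Hb. exact (@is_series_plus R_AbsRing C_R_NormedModule a b la lb Ha Hb). Qed.

Lemma is_series_Cext (a b : nat -> C) l : (forall j, a j = b j) ->
  @is_series _ C_R_NormedModule a l -> @is_series _ C_R_NormedModule b l.
Proof. intros H. apply is_series_ext; auto. Qed.

Lemma is_series_fst (a : nat -> C) l : @is_series _ C_R_NormedModule a l ->
  is_lim_seq (fun N => fst (Cfs a (S N))) (fst l).
Proof.
  intros H. destruct l as [l1 l2].
  apply (is_lim_seq_ext (fun N => fst (@sum_n C_R_NormedModule a N))).
  { intros; rewrite sum_n_Cfs; auto. }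
  unfold is_lim_seq.
  apply (filterlim_comp nat C_R_NormedModule R (@sum_n C_R_NormedModule a) fst eventually (locally (l1, l2)) (locally l1)).
  exact H. apply (continuous_fst (U := R_UniformSpace) (V := R_UniformSpace) l1 l2).
Qed.

Lemma is_series_snd (a : nat -> C) l : @is_series _ C_R_NormedModule a l ->
  is_lim_seq (fun N => snd (Cfs a (S N))) (snd l).
Proof.
  intros H. destruct l as [l1 l2].
  apply (is_lim_seq_ext (fun N => snd (@sum_n C_R_NormedModule a N))).
  { intros; rewrite sum_n_Cfs; auto. }
  unfold is_lim_seq.
  apply (filterlim_comp nat C_R_NormedModule R (@sum_n C_R_NormedModule a) snd eventually (locally (l1, l2)) (locally l2)).
  exact H. apply (continuous_snd (U := R_UniformSpace) (V := R_UniformSpace) l1 l2).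
Qed.

Definition ccont (f : R -> C) : Prop := cont (fun t => fst (f t)) /\ cont (fun t => snd (f t)).
Definition CIf (x : R) (f : R -> C) : C := (RI (fun t => fst (f t)) 0 x, RI (fun t => snd (f t)) 0 x).

Lemma Dt_CIf x l m : ccont (fun t => (ccos (csqrt l * RtoC t) * ccos (csqrt m * RtoC t))%C) ->
  Dt x l m = CIf x (fun t => (ccos (csqrt l * RtoC t) * ccos (csqrt m * RtoC t))%C).
Proof.
  intros [H1 H2]. unfold Dt, CIf, RI.
  set (f := fun t => (ccos (csqrt l * RtoC t) * ccos (csqrt m * RtoC t))%C).
  assert (Hex : @ex_RInt C_R_NormedModule f 0 x).
  { apply (@ex_RInt_fct_extend_pair R_NormedModule R_NormedModule f 0 x); apply exRI; auto. }
  symmetry.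
  apply (@RInt_fct_extend_pair R_NormedModule R_NormedModule (@RInt R_CompleteNormedModule) (@RInt R_CompleteNormedModule)).
  - intros; apply is_RInt_unique; auto.
  - intros; apply is_RInt_unique; auto.
  - apply (@RInt_correct C_R_CompleteNormedModule). exact Hex.
Qed.

Definition cc (z : C) (t : R) : C := ccos (z * RtoC t).
Lemma cc_fst z t : fst (cc z t) = cos (fst z * t) * cosh (snd z * t).
Proof. unfold cc, ccos; simpl. f_equal; f_equal; ring. Qed.
Lemma cc_snd z t : snd (cc z t) = - (sin (fst z * t) * sinh (snd z * t)).
Proof. unfold cc, ccos; simpl. f_equal; f_equal; f_equal; ring. Qed.

Lemma ccont_ext f g : (forall t, f t = g t) -> ccont f -> ccont g.
Proof. intros H [H1 H2]; split; [eapply cont_ext; [|exact H1]|eapply cont_ext; [|exact H2]]; intros; simpl; rewrite H; auto. Qed.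
Lemma ccont_plus f g : ccont f -> ccont g -> ccont (fun t => (f t + g t)%C).
Proof. intros [H1 H2] [H3 H4]; split; simpl; auto with cont. Qed.
Lemma ccont_mult f g : ccont f -> ccont g -> ccont (fun t => (f t * g t)%C).
Proof. intros [H1 H2] [H3 H4]; split; simpl; auto with cont. Qed.
Lemma ccont_const c : ccont (fun _ => c).
Proof. split; apply cont_const. Qed.
Lemma ccont_real g : cont g -> ccont (fun t => RtoC (g t)).
Proof. intros; split; simpl; auto with cont. Qed.
Lemma ccont_opp f : ccont f -> ccont (fun t => (- f t)%C).
Proof. intros [H1 H2]; split; simpl; auto with cont. Qed.
Lemma ccont_minus f g : ccont f -> ccont g -> ccont (fun t => (f t - g t)%C).
Proof. intros. apply ccont_plus; auto. apply ccont_opp; auto. Qed.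
Lemma ccont_cc z : ccont (cc z).
Proof. split.
  - apply (cont_ext (fun t => cos (fst z * t) * cosh (snd z * t))); [intros; rewrite cc_fst; auto|auto with cont].
  - apply (cont_ext (fun t => - (sin (fst z * t) * sinh (snd z * t)))); [intros; rewrite cc_snd; auto|auto with cont].
Qed.
Lemma ccont_Cfs (f : nat -> R -> C) n : (forall j, ccont (f j)) -> ccont (fun t => Cfs (fun j => f j t) n).
Proof. intros H; induction n; simpl. apply ccont_const. apply ccont_plus; auto. Qed.

Hint Resolve ccont_plus ccont_mult ccont_const ccont_real ccont_opp ccont_minus ccont_cc ccont_Cfs : ccont.

Lemma CIf_ext x f g : (forall t, f t = g t) -> CIf x f = CIf x g.
Proof. intros H. unfold CIf. f_equal; apply RI_ext; intros; rewrite H; auto. Qed.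
Lemma CIf_plus x f g : ccont f -> ccont g -> CIf x (fun t => (f t + g t)%C) = (CIf x f + CIf x g)%C.
Proof. intros [H1 H2] [H3 H4]. unfold CIf. simpl. rewrite !RI_plus by auto. reflexivity. Qed.
Lemma CIf_scal x (c : C) f : ccont f -> CIf x (fun t => (c * f t)%C) = (c * CIf x f)%C.
Proof. intros [H1 H2]. unfold CIf, Cmult. simpl.
  rewrite !RI_plus, !RI_minus, !RI_scal by auto with cont. reflexivity. Qed.
Lemma CIf_Cfs x (f : nat -> R -> C) n : (forall j, ccont (f j)) ->
  CIf x (fun t => Cfs (fun j => f j t) n) = Cfs (fun j => CIf x (f j)) n.
Proof. intros H. induction n; simpl.
  - unfold CIf. simpl. rewrite !RI_const. apply injective_projections; simpl; ring.
  - rewrite CIf_plus; auto with ccont. rewrite IHn; auto.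
Qed.
Lemma Cfs_ext f g n : (forall j, (j < n)%nat -> f j = g j) -> Cfs f n = Cfs g n.
Proof. induction n; simpl; intros H; auto. rewrite IHn by (intros; apply H; lia). rewrite H by lia; auto. Qed.
Lemma Cfs_mult_l (c : C) f n : (c * Cfs f n)%C = Cfs (fun j => c * f j)%C n.
Proof. induction n; simpl. apply injective_projections; simpl; ring. rewrite <- IHn; ring. Qed.

Lemma Cmod_fst z : Rabs (fst z) <= Cmod z.
Proof. pose proof (Rmax_Cmod z). pose proof (Rmax_l (Rabs (fst z)) (Rabs (snd z))). lra. Qed.
Lemma Cmod_snd z : Rabs (snd z) <= Cmod z.
Proof. pose proof (Rmax_Cmod z). pose proof (Rmax_r (Rabs (fst z)) (Rabs (snd z))). lra. Qed.
Lemma Cmod_sq z : Cmod z ^ 2 = fst z ^ 2 + snd z ^ 2.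
Proof. unfold Cmod. rewrite pow2_sqrt; auto. nra. Qed.
Lemma Cmod_le_sum z : Cmod z <= Rabs (fst z) + Rabs (snd z).
Proof.
  apply Rsqr_incr_0_var; [|pose proof (Rabs_pos (fst z)); pose proof (Rabs_pos (snd z)); lra].
  rewrite !Rsqr_pow2, Cmod_sq. rewrite <- (pow2_abs (fst z)), <- (pow2_abs (snd z)) at 1.
  pose proof (Rabs_pos (fst z)); pose proof (Rabs_pos (snd z)). nra.
Qed.
Lemma Cmod_opp' z : Cmod (- z) = Cmod z.
Proof. unfold Cmod. simpl. f_equal. ring. Qed.
Lemma Cmod_minus_tri a b : Cmod (a - b) <= Cmod a + Cmod b.
Proof. unfold Cminus. eapply Rle_trans; [apply Cmod_triangle|]. rewrite Cmod_opp'. lra. Qed.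

Lemma fst_mul_real (z : C) a : fst (z * RtoC a)%C = fst z * a.
Proof. simpl. ring. Qed.
Lemma snd_mul_real (z : C) a : snd (z * RtoC a)%C = snd z * a.
Proof. simpl. ring. Qed.
Lemma fst_real_mul (z : C) a : fst (RtoC a * z)%C = a * fst z.
Proof. simpl. ring. Qed.
Lemma snd_real_mul (z : C) a : snd (RtoC a * z)%C = a * snd z.
Proof. simpl. ring. Qed.

Lemma cc_real r t : cc (RtoC r) t = RtoC (cos (r * t)).
Proof. apply injective_projections. rewrite cc_fst. simpl. rewrite Rmult_0_l. unfold cosh. rewrite Ropp_0, exp_0. field.
  rewrite cc_snd. simpl. rewrite Rmult_0_l. unfold sinh. rewrite Ropp_0, exp_0. field. Qed.

Lemma csqrt_sq r : 0 <= r -> csqrt (RtoC (r * r)) = RtoC r.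
Proof.
  intros Hr. unfold csqrt, RtoC. simpl.
  assert (E : Cmod (r * r, 0) = r * r).
  { unfold Cmod; simpl. replace ((r * r) * ((r * r) * 1) + 0 * (0 * 1)) with ((r * r) ^ 2) by ring.
    apply sqrt_pow2. nra. }
  rewrite E. destruct (Rlt_dec 0 0); [lra|].
  apply injective_projections; simpl.
  - replace ((r * r + r * r) / 2) with (r ^ 2) by field. apply sqrt_pow2; auto.
  - replace ((r * r - r * r) / 2) with 0 by field. rewrite sqrt_0. ring.
Qed.

Lemma alphat_le1 p k : Rabs (alphat p k) <= 1.
Proof.
  pose proof PI2_1 as H. unfold alphat.
  destruct (k =? 1)%nat; [|destruct (k <=? p + 1)%nat].
  - rewrite Rabs_right. apply Rmult_le_reg_l with PI; [lra|]. field_simplify; lra.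
    left; apply Rdiv_lt_0_compat; lra.
  - rewrite Rabs_R0; lra.
  - rewrite Rabs_right. apply Rmult_le_reg_l with PI; [lra|]. field_simplify; lra.
    left; apply Rdiv_lt_0_compat; lra.
Qed.

Definition uu p lam (psi : nat -> vec2) k : C := (rhohat p lam k * fst (psi k) + snd (psi k))%C.
Definition Fterm p lam alpha psi k t : C :=
  ((alpha k * uu p lam psi k) * cc (rho lam k) t - (RtoC (alphat p k) * snd (psi k)) * cc (RtoC (rhot p k)) t)%C.
Definition FM p lam alpha psi M t : C := Cfs (fun j => Fterm p lam alpha psi (S j) t) M.

Lemma ccont_Fterm p lam alpha psi k : ccont (Fterm p lam alpha psi k).
Proof. unfold Fterm; auto with ccont. Qed.
Lemma ccont_FM p lam alpha psi M : ccont (FM p lam alpha psi M).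
Proof. unfold FM. apply ccont_Cfs. intros; apply ccont_Fterm. Qed.

Definition ser_fst p lam alpha x (psi : nat -> vec2) n j : C :=
  fst (mv (Qmat p lam alpha x n (S j)) (mv (Tinv p lam (S j)) (psi (S j)))).
Definition ser_snd p lam alpha x (psi : nat -> vec2) n j : C :=
  snd (mv (Qmat p lam alpha x n (S j)) (mv (Tinv p lam (S j)) (psi (S j)))).

Lemma Dt_cc x z w : Dt x z w = CIf x (fun t => (cc (csqrt z) t * cc (csqrt w) t)%C).
Proof. apply Dt_CIf. unfold cc; auto with ccont. apply ccont_mult; apply ccont_cc. Qed.

Lemma ser_gen p lam alpha x (psi : nat -> vec2) n i k z0 :
  csqrt (lami p lam n i) = z0 ->
  (Qt p lam alpha x n i k false * (rhohat p lam k * fst (psi k) + RtoC 1 * snd (psi k))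
   + (- Qt p lam alpha x n i k true) * (RtoC 0 * fst (psi k) + RtoC 1 * snd (psi k)))%C
  = CIf x (fun t => (cc z0 t * Fterm p lam alpha psi k t)%C).
Proof.
  intros Hz. unfold Qt. rewrite !Dt_cc. rewrite Hz.
  cbn [lami alphai].
  rewrite (csqrt_sq (rhot p k)) by apply rhot_ge0.
  change (csqrt (lam k)) with (rho lam k).
  rewrite (CIf_ext x (fun t => (cc z0 t * Fterm p lam alpha psi k t)%C) (fun t => ((alpha k * uu p lam psi k) * (cc z0 t * cc (rho lam k) t)
        + (- (RtoC (alphat p k) * snd (psi k))) * (cc z0 t * cc (RtoC (rhot p k)) t))%C)).
  2:{ intros; unfold Fterm; ring. }
  rewrite CIf_plus, !CIf_scal by (auto with ccont).
  unfold uu. ring.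
Qed.

Lemma ser_fst_eq p lam alpha x psi n j :
  ser_fst p lam alpha x psi n j = CIf x (fun t => (cc (rho lam n) t * Fterm p lam alpha psi (S j) t)%C).
Proof. unfold ser_fst, mv, Qmat, Tinv. cbn [fst snd]. apply ser_gen. reflexivity. Qed.

Lemma ser_snd_eq p lam alpha x psi n j :
  ser_snd p lam alpha x psi n j = CIf x (fun t => (cc (RtoC (rhot p n)) t * Fterm p lam alpha psi (S j) t)%C).
Proof. unfold ser_snd, mv, Qmat, Tinv. cbn [fst snd]. apply ser_gen. cbn [lami]. apply csqrt_sq, rhot_ge0. Qed.

Lemma ser_fst_sum p lam alpha x psi n M :
  Cfs (ser_fst p lam alpha x psi n) M = CIf x (fun t => (cc (rho lam n) t * FM p lam alpha psi M t)%C).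
Proof.
  rewrite (CIf_ext x _ (fun t => Cfs (fun j => (cc (rho lam n) t * Fterm p lam alpha psi (S j) t)%C) M)).
  - rewrite CIf_Cfs by (intros; auto with ccont; apply ccont_mult; [apply ccont_cc|apply ccont_Fterm]).
    apply Cfs_ext; intros; apply ser_fst_eq.
  - intros; unfold FM; apply Cfs_mult_l.
Qed.

Lemma ser_snd_sum p lam alpha x psi n M :
  Cfs (ser_snd p lam alpha x psi n) M = CIf x (fun t => (cc (RtoC (rhot p n)) t * FM p lam alpha psi M t)%C).
Proof.
  rewrite (CIf_ext x _ (fun t => Cfs (fun j => (cc (RtoC (rhot p n)) t * Fterm p lam alpha psi (S j) t)%C) M)).
  - rewrite CIf_Cfs by (intros; auto with ccont; apply ccont_mult; [apply ccont_cc|apply ccont_Fterm]).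
    apply Cfs_ext; intros; apply ser_snd_eq.
  - intros; unfold FM; apply Cfs_mult_l.
Qed.

Definition good p lam alpha (psi : nat -> vec2) Om B : Prop :=
  0 < Om /\ 0 <= B /\
  (forall M, fs (fun j => xi p lam alpha (S j) ^ 2) M <= Om ^ 2) /\
  (forall k, (1 <= k)%nat -> Cmod (fst (psi k)) <= B /\ Cmod (snd (psi k)) <= B).

Definition Ak p lam alpha psi k : C := (alpha k * uu p lam psi k - RtoC (alphat p k) * snd (psi k))%C.
Definition Ek p lam alpha psi k : C := (alpha k * uu p lam psi k * rhohat p lam k)%C.
Definition Bk p lam alpha psi k : C := (alpha k * uu p lam psi k)%C.
Definition Rk p lam k t : C :=
  (cc (rho lam k) t - RtoC (cos (rhot p k * t)) + rhohat p lam k * RtoC (t * sin (rhot p k * t)))%C.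

Lemma ccont_Rk p lam k : ccont (Rk p lam k).
Proof. unfold Rk. apply ccont_plus; [apply ccont_minus|apply ccont_mult]; auto with ccont cont. Qed.

Lemma Fterm_decomp p lam alpha psi k t :
  Fterm p lam alpha psi k t =
  (Ak p lam alpha psi k * RtoC (cos (rhot p k * t)) - Ek p lam alpha psi k * RtoC (t * sin (rhot p k * t))
   + Bk p lam alpha psi k * Rk p lam k t)%C.
Proof. unfold Fterm, Ak, Ek, Bk, Rk. rewrite cc_real. ring. Qed.

Lemma xi_ge0 p lam alpha k : 0 <= xi p lam alpha k.
Proof. unfold xi. pose proof (Cmod_ge_0 (rho lam k - RtoC (rhot p k))). pose proof (Cmod_ge_0 (alpha k - RtoC (alphat p k))). lra. Qed.




Lemma xi_le p lam alpha psi Om B : good p lam alpha psi Om B ->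
  forall k, (1 <= k)%nat -> xi p lam alpha k <= Om.
Proof.
  intros [HO [HB [Hs Hp]]] k Hk.
  assert (xi p lam alpha k ^ 2 <= Om ^ 2).
  { replace k with (S (k - 1)) by lia. eapply Rle_trans; [|apply (Hs k)].
    apply (fs_term (fun j => xi p lam alpha (S j) ^ 2) k (k - 1)); [lia|intros; apply pow2_ge_0]. }
  pose proof (xi_ge0 p lam alpha k). nra.
Qed.

Lemma dl_le p lam alpha k : Cmod (rhohat p lam k) <= xi p lam alpha k.
Proof. unfold xi, rhohat. pose proof (Cmod_ge_0 (alpha k - RtoC (alphat p k))). lra. Qed.
Lemma al_le p lam alpha k : Cmod (alpha k - RtoC (alphat p k)) <= xi p lam alpha k.
Proof. unfold xi, rhohat. pose proof (Cmod_ge_0 (rho lam k - RtoC (rhot p k))). lra. Qed.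

Lemma alpha_bound p lam alpha k : Cmod (alpha k) <= 1 + xi p lam alpha k.
Proof.
  replace (alpha k) with ((alpha k - RtoC (alphat p k)) + RtoC (alphat p k))%C by ring.
  eapply Rle_trans; [apply Cmod_triangle|]. rewrite Cmod_R.
  pose proof (al_le p lam alpha k). pose proof (alphat_le1 p k). lra.
Qed.

Lemma Cmod_mul_le (a b : C) A B : Cmod a <= A -> Cmod b <= B -> Cmod (a * b)%C <= A * B.
Proof. intros. rewrite Cmod_mult. apply Rmult_le_compat; auto using Cmod_ge_0. Qed.

Lemma coef_bounds p lam alpha psi Om B : good p lam alpha psi Om B ->
  forall k, (1 <= k)%nat ->
  Cmod (uu p lam psi k) <= (Om + 1) * B /\
  Cmod (Ak p lam alpha psi k) <= (2 + Om) * B * xi p lam alpha k /\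
  Cmod (Ek p lam alpha psi k) <= (1 + Om) * ((Om + 1) * B) * xi p lam alpha k /\
  Cmod (Bk p lam alpha psi k) <= (1 + Om) * ((Om + 1) * B).
Proof.
  intros Hg k Hk. pose proof (xi_le _ _ _ _ _ _ Hg k Hk) as HX.
  destruct Hg as [HO [HB [Hs Hp]]]. destruct (Hp k Hk) as [H0 H1].
  set (X := xi p lam alpha k) in *. pose proof (xi_ge0 p lam alpha k) as HX0. fold X in HX0.
  pose proof (dl_le p lam alpha k) as Hd. pose proof (al_le p lam alpha k) as Ha.
  pose proof (alpha_bound p lam alpha k) as Hal. fold X in Hd, Ha, Hal.
  assert (Hal' : Cmod (alpha k) <= 1 + Om) by lra.
  assert (Hu : Cmod (uu p lam psi k) <= (Om + 1) * B).
  { unfold uu. eapply Rle_trans; [apply Cmod_triangle|].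
    assert (Cmod (rhohat p lam k * fst (psi k)) <= Om * B) by (apply Cmod_mul_le; lra). lra. }
  split; [exact Hu|]. split; [|split].
  - unfold Ak, uu.
    replace (alpha k * (rhohat p lam k * fst (psi k) + snd (psi k)) - RtoC (alphat p k) * snd (psi k))%C
      with (alpha k * rhohat p lam k * fst (psi k) + (alpha k - RtoC (alphat p k)) * snd (psi k))%C by ring.
    eapply Rle_trans; [apply Cmod_triangle|].
    assert (Cmod (alpha k * rhohat p lam k * fst (psi k)) <= (1 + Om) * X * B)
      by (apply Cmod_mul_le; [apply Cmod_mul_le|]; lra).
    assert (Cmod ((alpha k - RtoC (alphat p k)) * snd (psi k)) <= X * B) by (apply Cmod_mul_le; lra).
    nra.
  - unfold Ek. apply Cmod_mul_le; [apply Cmod_mul_le|]; lra.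
  - unfold Bk. apply Cmod_mul_le; lra.
Qed.

Definition cR Om := 2 * PI ^ 2 * exp (PI * Om).

Lemma Rk_bound0 p lam Om k t : 0 < Om -> Cmod (rhohat p lam k) <= Om -> 0 <= t <= PI ->
  Rabs (fst (Rk p lam k t)) <= cR Om * Cmod (rhohat p lam k) ^ 2 /\
  Rabs (snd (Rk p lam k t)) <= cR Om * Cmod (rhohat p lam k) ^ 2.
Proof.
  intros HO Hd Ht.
  set (d := rhohat p lam k) in *.
  assert (Hd1 : Rabs (fst d) <= Om) by (pose proof (Cmod_fst d); lra).
  assert (Hd2 : Rabs (snd d) <= Om) by (pose proof (Cmod_snd d); lra).
  rewrite Cmod_sq.
  assert (E1 : fst (rho lam k) = rhot p k + fst d) by (unfold d, rhohat; simpl; ring).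
  assert (E2 : snd (rho lam k) = snd d) by (unfold d, rhohat; simpl; ring).
  unfold Rk. fold d. split.
  - unfold Cminus, Cplus, Copp. cbn [fst snd]. rewrite fst_mul_real, cc_fst, E1, E2. simpl (fst (RtoC _)).
    replace (cos ((rhot p k + fst d) * t) * cosh (snd d * t) + - cos (rhot p k * t) +
     fst d * (t * sin (rhot p k * t))) with (cos ((rhot p k + fst d) * t) * cosh (snd d * t) - cos (rhot p k * t) + fst d * t * sin (rhot p k * t)) by ring.
    apply (rem_re _ _ _ _ Om); auto.
  - unfold Cminus, Cplus, Copp. cbn [fst snd]. rewrite snd_mul_real, cc_snd, E1, E2. simpl (snd (RtoC _)).
    match goal with |- Rabs ?e <= _ => replace e with (- (sin ((rhot p k + fst d) * t) * sinh (snd d * t)) + snd d * t * sin (rhot p k * t)) by ring end.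
    apply (rem_im _ _ _ _ Om); auto.
Qed.

Lemma Rk_bound p lam alpha psi Om B : good p lam alpha psi Om B ->
  forall k t, (1 <= k)%nat -> 0 <= t <= PI ->
  Rabs (fst (Rk p lam k t)) <= cR Om * xi p lam alpha k ^ 2 /\
  Rabs (snd (Rk p lam k t)) <= cR Om * xi p lam alpha k ^ 2.
Proof.
  intros Hg k t Hk Ht. pose proof (xi_le _ _ _ _ _ _ Hg k Hk) as HX.
  pose proof (dl_le p lam alpha k) as Hd. pose proof Hg as [HO _].
  assert (0 < cR Om) by (unfold cR; apply Rmult_lt_0_compat; [apply Rmult_lt_0_compat; [lra|apply pow_lt; apply PI_RGT_0]|apply exp_pos]).
  destruct (Rk_bound0 p lam Om k t HO ltac:(lra) Ht) as [H1 H2].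
  assert (Cmod (rhohat p lam k) ^ 2 <= xi p lam alpha k ^ 2) by (apply pow_incr; split; auto using Cmod_ge_0).
  split; (eapply Rle_trans; [eassumption|]); apply Rmult_le_compat_l; lra.
Qed.

Definition isproj (pr : C -> R) : Prop := pr = fst \/ pr = snd.

Lemma pr_Cfs pr f n : isproj pr -> pr (Cfs f n) = fs (fun j => pr (f j)) n.
Proof. intros [-> | ->]; [apply Cfs_fst|apply Cfs_snd]. Qed.
Lemma pr_plus pr a b : isproj pr -> pr (a + b)%C = pr a + pr b.
Proof. intros [-> | ->]; reflexivity. Qed.
Lemma pr_minus pr a b : isproj pr -> pr (a - b)%C = pr a - pr b.
Proof. intros [-> | ->]; simpl; ring. Qed.
Lemma pr_mul_real pr z a : isproj pr -> pr (z * RtoC a)%C = pr z * a.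
Proof. intros [-> | ->]; simpl; ring. Qed.
Lemma pr_cont pr f : isproj pr -> ccont f -> cont (fun t => pr (f t)).
Proof. intros [-> | ->] [H1 H2]; auto. Qed.
Lemma pr_le pr z : isproj pr -> Rabs (pr z) <= Cmod z.
Proof. intros [-> | ->]; [apply Cmod_fst|apply Cmod_snd]. Qed.

Lemma sq3 a b c : (a - b + c) ^ 2 <= 3 * (a ^ 2 + b ^ 2 + c ^ 2).
Proof. assert (0 <= (a + b) ^ 2 + (a - c) ^ 2 + (b + c) ^ 2) by (repeat apply Rplus_le_le_0_compat; apply pow2_ge_0). nra. Qed.

Definition cBk Om B := (1 + Om) * ((Om + 1) * B).
Definition cZ Om B := 2 * cBk Om B * cR Om * Om ^ 2.

Lemma xi_fs_bound p lam alpha psi Om B : good p lam alpha psi Om B ->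
  forall M, fs (fun j => xi p lam alpha (S j) ^ 2) M <= Om ^ 2.
Proof. intros [_ [_ [H _]]]; exact H. Qed.

Lemma comp_bound p lam alpha psi Om B x pr : good p lam alpha psi Om B -> 0 <= x <= PI -> isproj pr ->
  forall M, RI (fun t => pr (FM p lam alpha psi M t) ^ 2) 0 x <=
  3 * ((INR p + 2) * PI * fs (fun j => pr (Ak p lam alpha psi (S j)) ^ 2) M
       + PI ^ 3 * fs (fun j => pr (Ek p lam alpha psi (S j)) ^ 2) M + PI * cZ Om B ^ 2).
Proof.
  intros Hg Hx Hpr M.
  set (X := fun t => fs (fun j => pr (Ak p lam alpha psi (S j)) * cos (rhot p (S j) * t)) M).
  set (Y := fun t => fs (fun j => pr (Ek p lam alpha psi (S j)) * (t * sin (rhot p (S j) * t))) M).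
  set (Z := fun t => fs (fun j => pr (Bk p lam alpha psi (S j) * Rk p lam (S j) t)%C) M).
  assert (HX : cont X) by (unfold X; auto with cont).
  assert (HY : cont Y) by (unfold Y; auto with cont).
  assert (HZ : cont Z).
  { unfold Z. apply cont_fs; intros j. apply pr_cont; auto. apply ccont_mult; [apply ccont_const|apply ccont_Rk]. }
  assert (Hdec : forall t, pr (FM p lam alpha psi M t) = X t - Y t + Z t).
  { intros t. unfold FM. rewrite pr_Cfs by auto. unfold X, Y, Z. rewrite <- fs_minus, <- fs_plus.
    apply fs_ext; intros j _. rewrite Fterm_decomp, pr_plus, pr_minus, !pr_mul_real by auto. ring. }
  assert (HZb : forall t, 0 <= t <= PI -> Rabs (Z t) <= cZ Om B).
  { intros t Ht. unfold Z. eapply Rle_trans; [apply fs_abs|].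
    eapply Rle_trans.
    { apply (fs_le _ (fun j => 2 * cBk Om B * cR Om * xi p lam alpha (S j) ^ 2)).
      intros j _. eapply Rle_trans; [apply pr_le; auto|]. rewrite Cmod_mult.
      destruct (coef_bounds _ _ _ _ _ _ Hg (S j) ltac:(lia)) as [_ [_ [_ HBk]]].
      destruct (Rk_bound _ _ _ _ _ _ Hg (S j) t ltac:(lia) Ht) as [HR1 HR2].
      pose proof (Cmod_le_sum (Rk p lam (S j) t)).
      assert (Cmod (Rk p lam (S j) t) <= 2 * (cR Om * xi p lam alpha (S j) ^ 2)) by lra.
      unfold cBk. replace (2 * ((1 + Om) * ((Om + 1) * B)) * cR Om * xi p lam alpha (S j) ^ 2)
        with (((1 + Om) * ((Om + 1) * B)) * (2 * (cR Om * xi p lam alpha (S j) ^ 2))) by ring.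
      apply Rmult_le_compat; auto using Cmod_ge_0. }
    rewrite fs_scal. unfold cZ. pose proof Hg as [HO [HB _]].
    assert (0 <= 2 * cBk Om B * cR Om).
    { assert (0 <= cBk Om B) by (unfold cBk; apply Rmult_le_pos; [lra|apply Rmult_le_pos; lra]).
      assert (0 <= cR Om) by (unfold cR; apply Rmult_le_pos; [apply Rmult_le_pos; [lra|apply pow2_ge_0]|left; apply exp_pos]).
      apply Rmult_le_pos; [apply Rmult_le_pos|]; lra. }
    apply Rmult_le_compat_l; auto. apply (xi_fs_bound _ _ _ _ _ _ Hg). }
  rewrite (RI_ext _ (fun t => (X t - Y t + Z t) ^ 2)) by (intros; rewrite Hdec; auto).
  eapply Rle_trans.
  { apply (RI_le _ (fun t => 3 * (X t ^ 2 + Y t ^ 2 + Z t ^ 2))); [lra|auto with cont|auto with cont|].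
    intros; apply sq3. }
  rewrite RI_scal, RI_plus, RI_plus by auto with cont.
  assert (G1 : RI (fun t => X t ^ 2) 0 x <= (INR p + 2) * PI * fs (fun j => pr (Ak p lam alpha psi (S j)) ^ 2) M)
    by (unfold X; apply gram_rhot; auto).
  assert (G2 : RI (fun t => Y t ^ 2) 0 x <= PI ^ 3 * fs (fun j => pr (Ek p lam alpha psi (S j)) ^ 2) M)
    by (unfold Y; apply gram_tsin; auto).
  assert (G3 : RI (fun t => Z t ^ 2) 0 x <= cZ Om B ^ 2 * (x - 0)).
  { apply RI_bound; [lra|auto with cont|]. intros t Ht.
    pose proof (HZb t ltac:(lra)). rewrite <- (pow2_abs (Z t)). apply pow_incr. split; auto using Rabs_pos. }
  assert (0 <= cZ Om B ^ 2) by apply pow2_ge_0.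
  assert (cZ Om B ^ 2 * (x - 0) <= PI * cZ Om B ^ 2) by nra.
  lra.
Qed.

Definition KF p Om B := 3 * ((INR p + 2) * PI * (((2 + Om) * B) ^ 2 * Om ^ 2)
  + PI ^ 3 * (cBk Om B ^ 2 * Om ^ 2) + 2 * (PI * cZ Om B ^ 2)).

Lemma fs_cmod_sq (f : nat -> C) c (w : nat -> R) M Om :
  0 <= c -> (forall j, Cmod (f j) <= c * w j) -> (forall j, 0 <= w j) ->
  fs (fun j => w j ^ 2) M <= Om ^ 2 ->
  fs (fun j => fst (f j) ^ 2) M + fs (fun j => snd (f j) ^ 2) M <= c ^ 2 * Om ^ 2.
Proof.
  intros Hc Hf Hw Hs. rewrite <- fs_plus.
  eapply Rle_trans; [apply (fs_le _ (fun j => c ^ 2 * w j ^ 2))|].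
  - intros j _. rewrite <- Cmod_sq. rewrite <- Rpow_mult_distr. apply pow_incr.
    split; [apply Cmod_ge_0|auto].
  - rewrite fs_scal. apply Rmult_le_compat_l; auto. apply pow2_ge_0.
Qed.

Lemma F_bound p lam alpha psi Om B x : good p lam alpha psi Om B -> 0 <= x <= PI ->
  forall M, RI (fun t => fst (FM p lam alpha psi M t) ^ 2) 0 x
          + RI (fun t => snd (FM p lam alpha psi M t) ^ 2) 0 x <= KF p Om B.
Proof.
  intros Hg Hx M.
  pose proof (comp_bound _ _ _ _ _ _ x fst Hg Hx (or_introl eq_refl) M) as H1.
  pose proof (comp_bound _ _ _ _ _ _ x snd Hg Hx (or_intror eq_refl) M) as H2.
  pose proof Hg as [HO [HB [Hs _]]].
  assert (HA := fs_cmod_sq (fun j => Ak p lam alpha psi (S j)) ((2 + Om) * B)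
                  (fun j => xi p lam alpha (S j)) M Om).
  assert (HE := fs_cmod_sq (fun j => Ek p lam alpha psi (S j)) (cBk Om B)
                  (fun j => xi p lam alpha (S j)) M Om).
  cbv beta in HA, HE.
  assert (HA' : fs (fun j => fst (Ak p lam alpha psi (S j)) ^ 2) M + fs (fun j => snd (Ak p lam alpha psi (S j)) ^ 2) M
               <= ((2 + Om) * B) ^ 2 * Om ^ 2).
  { apply HA; auto. apply Rmult_le_pos; lra.
    intros j. destruct (coef_bounds _ _ _ _ _ _ Hg (S j) ltac:(lia)) as [_ [H _]]; exact H.
    intros; apply xi_ge0. }
  assert (HE' : fs (fun j => fst (Ek p lam alpha psi (S j)) ^ 2) M + fs (fun j => snd (Ek p lam alpha psi (S j)) ^ 2) M
               <= cBk Om B ^ 2 * Om ^ 2).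
  { apply HE; auto. unfold cBk; apply Rmult_le_pos; [lra|apply Rmult_le_pos; lra].
    intros j. destruct (coef_bounds _ _ _ _ _ _ Hg (S j) ltac:(lia)) as [_ [_ [H _]]]. unfold cBk; exact H.
    intros; apply xi_ge0. }
  unfold KF. pose proof PI_RGT_0. pose proof (pos_INR p).
  assert (0 <= PI ^ 3) by (apply pow_le; lra).
  assert (0 <= (INR p + 2) * PI) by nra.
  nra.
Qed.

Lemma RI_abs_le f g x : 0 <= x -> cont f -> cont g -> (forall t, 0 <= t <= x -> Rabs (f t) <= g t) ->
  Rabs (RI f 0 x) <= RI g 0 x.
Proof.
  intros Hx Hf Hg H. apply Rabs_le. split.
  - rewrite <- RI_opp by auto. apply RI_le; auto with cont. intros t Ht. pose proof (H t Ht). pose proof (Rle_abs (f t)). pose proof (Rle_abs (- f t)). rewrite Rabs_Ropp in *. lra.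
  - apply RI_le; auto. intros t Ht. pose proof (H t Ht). pose proof (Rle_abs (f t)). pose proof (Rle_abs (- f t)). rewrite Rabs_Ropp in *. lra.
Qed.

Definition C3 p Om B := (INR p + 2) * PI * KF p Om B.

Lemma S1_bound p lam alpha psi Om B x : good p lam alpha psi Om B -> 0 <= x <= PI ->
  forall M N,
  fs (fun j => fst (CIf x (fun t => (cc (RtoC (rhot p (S j))) t * FM p lam alpha psi M t)%C)) ^ 2
             + snd (CIf x (fun t => (cc (RtoC (rhot p (S j))) t * FM p lam alpha psi M t)%C)) ^ 2) N
  <= C3 p Om B.
Proof.
  intros Hg Hx M N. rewrite fs_plus. unfold CIf. cbn [fst snd].
  destruct (ccont_FM p lam alpha psi M) as [HF1 HF2].
  rewrite (fs_ext _ (fun j => (RI (fun t => cos (rhot p (S j) * t) * fst (FM p lam alpha psi M t)) 0 x) ^ 2)).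
  rewrite (fs_ext (fun j => (RI (fun t => snd (cc (RtoC (rhot p (S j))) t * FM p lam alpha psi M t)%C) 0 x) ^ 2)
     (fun j => (RI (fun t => cos (rhot p (S j) * t) * snd (FM p lam alpha psi M t)) 0 x) ^ 2)).
  - pose proof (bessel_rhot p x Hx N _ HF1). pose proof (bessel_rhot p x Hx N _ HF2).
    pose proof (F_bound _ _ _ _ _ _ x Hg Hx M). unfold C3.
    assert (0 <= (INR p + 2) * PI) by (pose proof (pos_INR p); pose proof PI_RGT_0; nra).
    nra.
  - intros j _. f_equal. apply RI_ext; intros. rewrite cc_real. simpl. ring.
  - intros j _. f_equal. apply RI_ext; intros. rewrite cc_real. simpl. ring.
Qed.

Definition C4 p Om B := (2 * cR Om * (PI + KF p Om B / 2) + 1) * Om ^ 2 + PI ^ 3 * KF p Om B.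

Lemma absR_half a : Rabs a <= / 2 * (1 + a ^ 2).
Proof. rewrite <- (pow2_abs a). pose proof (Rabs_pos a). assert (0 <= (Rabs a - 1) ^ 2) by apply pow2_ge_0. nra. Qed.

Lemma q_bound p lam alpha psi Om B x : good p lam alpha psi Om B -> 0 <= x <= PI ->
  forall M n, (1 <= n)%nat -> forall pr, isproj pr ->
  Rabs (pr (CIf x (fun t => (Rk p lam n t * FM p lam alpha psi M t)%C)))
  <= cR Om * xi p lam alpha n ^ 2 * (PI + KF p Om B / 2).
Proof.
  intros Hg Hx M n Hn pr Hpr.
  set (F := FM p lam alpha psi M). set (Rn := Rk p lam n).
  destruct (ccont_FM p lam alpha psi M) as [HF1 HF2]. fold F in HF1, HF2.
  destruct (ccont_Rk p lam n) as [HR1 HR2]. fold Rn in HR1, HR2.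
  set (c := cR Om * xi p lam alpha n ^ 2).
  assert (Hc : 0 <= c).
  { unfold c, cR. apply Rmult_le_pos; [|apply pow2_ge_0]. apply Rmult_le_pos; [apply Rmult_le_pos; [lra|apply pow2_ge_0]|left; apply exp_pos]. }
  set (g := fun t => c * (/ 2 * (1 + fst (F t) ^ 2)) + c * (/ 2 * (1 + snd (F t) ^ 2))).
  assert (Hgc : cont g). { unfold g. apply cont_plus; apply cont_mult; try apply cont_const; apply cont_mult; try apply cont_const; apply cont_plus; try apply cont_const; apply cont_sq; auto. }
  assert (Hpt : forall t, 0 <= t <= x -> forall a b, Rabs a <= c -> Rabs b <= c ->
     Rabs (a * fst (F t)) + Rabs (b * snd (F t)) <= g t).
  { intros t Ht a b Ha Hb. unfold g. rewrite !Rabs_mult.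
    pose proof (absR_half (fst (F t))). pose proof (absR_half (snd (F t))).
    apply Rplus_le_compat; apply Rmult_le_compat; auto using Rabs_pos. }
  assert (HRb : forall t, 0 <= t <= x -> Rabs (fst (Rn t)) <= c /\ Rabs (snd (Rn t)) <= c)
    by (intros t Ht; apply (Rk_bound _ _ _ _ _ _ Hg); auto; lra).
  assert (Hg_int : RI g 0 x <= c * (PI + KF p Om B / 2)).
  { unfold g. rewrite RI_plus, !RI_scal by auto 10 with cont.
    rewrite !RI_plus, !RI_const by auto 10 with cont.
    pose proof (F_bound _ _ _ _ _ _ x Hg Hx M). fold F in H. nra. }
  eapply Rle_trans; [|apply Hg_int].
  destruct Hpr as [-> | ->]; unfold CIf; cbn [fst snd]; apply RI_abs_le; try lra.
  - apply (pr_cont fst); [left; auto|apply ccont_mult; [apply ccont_Rk|apply ccont_FM]].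
  - auto.
  - intros t Ht. simpl. destruct (HRb t Ht).
    eapply Rle_trans; [apply Rabs_triang|]. rewrite Rabs_Ropp.
    apply Hpt; auto.
  - apply (pr_cont snd); [right; auto|apply ccont_mult; [apply ccont_Rk|apply ccont_FM]].
  - auto.
  - intros t Ht. simpl. destruct (HRb t Ht).
    eapply Rle_trans; [apply Rabs_triang|]. rewrite Rplus_comm.
    apply Hpt; auto.
Qed.

Lemma KF_ge0 p lam alpha psi Om B x : good p lam alpha psi Om B -> 0 <= x <= PI -> 0 <= KF p Om B.
Proof.
  intros Hg Hx. pose proof (F_bound _ _ _ _ _ _ x Hg Hx 0%nat).
  destruct (ccont_FM p lam alpha psi 0) as [H1 H2].
  assert (0 <= RI (fun t => fst (FM p lam alpha psi 0 t) ^ 2) 0 x) by (apply RI_ge0; [lra|auto 10 with cont|intros; apply pow2_ge_0]).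
  assert (0 <= RI (fun t => snd (FM p lam alpha psi 0 t) ^ 2) 0 x) by (apply RI_ge0; [lra|auto 10 with cont|intros; apply pow2_ge_0]).
  lra.
Qed.

Definition dd p lam alpha psi x M n : C :=
  CIf x (fun t => ((cc (rho lam n) t - cc (RtoC (rhot p n)) t) * FM p lam alpha psi M t)%C).

Lemma D_bound p lam alpha psi Om B x : good p lam alpha psi Om B -> 0 <= x <= PI ->
  forall M N,
  fs (fun j => Rabs (fst (dd p lam alpha psi x M (S j))) + Rabs (snd (dd p lam alpha psi x M (S j)))) N
  <= C4 p Om B.
Proof.
  intros Hg Hx M N.
  set (F := FM p lam alpha psi M).
  destruct (ccont_FM p lam alpha psi M) as [HF1 HF2]. fold F in HF1, HF2.
  set (e := fun n => CIf x (fun t => (RtoC (t * sin (rhot p n * t)) * F t)%C)).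
  set (q := fun n => CIf x (fun t => (Rk p lam n t * F t)%C)).
  assert (Hd : forall n, dd p lam alpha psi x M n = (q n + (- rhohat p lam n) * e n)%C).
  { intros n. unfold dd, q, e. fold F.
    rewrite (CIf_ext x _ (fun t => (Rk p lam n t * F t + (- rhohat p lam n) * (RtoC (t * sin (rhot p n * t)) * F t))%C)).
    - assert (HFc : ccont F) by (split; auto).
      assert (H1 : ccont (fun t => (RtoC (t * sin (rhot p n * t)) * F t)%C))
        by (apply ccont_mult; [apply ccont_real; auto with cont|auto]).
      assert (H2 : ccont (fun t => (Rk p lam n t * F t)%C)) by (apply ccont_mult; [apply ccont_Rk|auto]).
      rewrite CIf_plus; [|auto|apply ccont_mult; [apply ccont_const|auto]].
      rewrite CIf_scal by auto. reflexivity.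
    - intros t. unfold Rk. rewrite cc_real. ring. }
  assert (HKF := KF_ge0 _ _ _ _ _ _ x Hg Hx).
  assert (HcR : 0 <= cR Om).
  { unfold cR. apply Rmult_le_pos; [apply Rmult_le_pos; [lra|apply pow2_ge_0]|left; apply exp_pos]. }
  assert (Hterm : forall n, (1 <= n)%nat ->
    Rabs (fst (dd p lam alpha psi x M n)) + Rabs (snd (dd p lam alpha psi x M n))
    <= (2 * cR Om * (PI + KF p Om B / 2) + 1) * xi p lam alpha n ^ 2 + (fst (e n) ^ 2 + snd (e n) ^ 2)).
  { intros n Hn. rewrite Hd.
    set (w := ((- rhohat p lam n) * e n)%C).
    change (fst (q n + w)%C) with (fst (q n) + fst w).
    change (snd (q n + w)%C) with (snd (q n) + snd w).
    pose proof (q_bound _ _ _ _ _ _ x Hg Hx M n Hn fst (or_introl eq_refl)) as Q1.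
    pose proof (q_bound _ _ _ _ _ _ x Hg Hx M n Hn snd (or_intror eq_refl)) as Q2.
    fold F in Q1, Q2. change (CIf x (fun t => (Rk p lam n t * F t)%C)) with (q n) in Q1, Q2.
    pose proof (Rabs_triang (fst (q n)) (fst w)). pose proof (Rabs_triang (snd (q n)) (snd w)).
    pose proof (Cmod_fst w). pose proof (Cmod_snd w).
    assert (Hw : Cmod w <= xi p lam alpha n * Cmod (e n)).
    { unfold w. rewrite Cmod_mult, Cmod_opp'. apply Rmult_le_compat_r; [apply Cmod_ge_0|apply dl_le]. }
    assert (2 * (xi p lam alpha n * Cmod (e n)) <= xi p lam alpha n ^ 2 + (fst (e n) ^ 2 + snd (e n) ^ 2)).
    { rewrite <- Cmod_sq. assert (0 <= (xi p lam alpha n - Cmod (e n)) ^ 2) by apply pow2_ge_0. nra. }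
    nra. }
  eapply Rle_trans.
  { apply (fs_le _ (fun j => (2 * cR Om * (PI + KF p Om B / 2) + 1) * xi p lam alpha (S j) ^ 2
                              + (fst (e (S j)) ^ 2 + snd (e (S j)) ^ 2))).
    intros j _. apply Hterm; lia. }
  rewrite fs_plus, fs_scal, fs_plus.
  assert (HE1 : fs (fun j => fst (e (S j)) ^ 2) N <= PI ^ 3 * RI (fun t => fst (F t) ^ 2) 0 x).
  { eapply Rle_trans; [|apply (bessel_tsin p x Hx N _ HF1)]. right. apply fs_ext; intros j _.
    unfold e, CIf. cbn [fst]. f_equal. apply RI_ext; intros. rewrite fst_real_mul. reflexivity. }
  assert (HE2 : fs (fun j => snd (e (S j)) ^ 2) N <= PI ^ 3 * RI (fun t => snd (F t) ^ 2) 0 x).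
  { eapply Rle_trans; [|apply (bessel_tsin p x Hx N _ HF2)]. right. apply fs_ext; intros j _.
    unfold e, CIf. cbn [snd]. f_equal. apply RI_ext; intros. rewrite snd_real_mul. reflexivity. }
  pose proof (F_bound _ _ _ _ _ _ x Hg Hx M) as HFb. fold F in HFb.
  pose proof (xi_fs_bound _ _ _ _ _ _ Hg N).
  assert (0 <= 2 * cR Om * (PI + KF p Om B / 2) + 1) by (pose proof PI_RGT_0; nra).
  assert (0 <= PI ^ 3) by (apply pow_le; pose proof PI_RGT_0; lra).
  unfold C4. nra.
Qed.

Definition Mt Om := 2 * cR Om * Om + PI + 1.

Lemma csin_real a b : csin (RtoC a * RtoC b) = RtoC (sin (a * b)).
Proof. unfold csin. apply injective_projections; simpl.
  - replace (a * b - 0 * 0) with (a * b) by ring. replace (a * 0 + 0 * b) with 0 by ring.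
    unfold cosh; rewrite Ropp_0, exp_0; field.
  - replace (a * 0 + 0 * b) with 0 by ring. unfold sinh; rewrite Ropp_0, exp_0; field.
Qed.

Lemma rhohat_is0_false p lam n : rhohat_is0 p lam n = false -> rhohat p lam n <> RtoC 0.
Proof. unfold rhohat_is0. destruct Req_EM_T as [H|H]; [discriminate|]. intros _ E. apply H. rewrite E. apply Cmod_0. Qed.
Lemma rhohat_is0_true p lam n : rhohat_is0 p lam n = true -> rhohat p lam n = RtoC 0.
Proof. unfold rhohat_is0. destruct Req_EM_T as [H|H]; [|discriminate]. intros _. apply Cmod_eq_0; auto. Qed.

Lemma psit_bound p lam x Om : 0 < Om -> 0 <= x <= PI -> forall n,
  Cmod (rhohat p lam n) <= Om ->
  Cmod (fst (psit p lam x n)) <= Mt Om /\ Cmod (snd (psit p lam x n)) <= Mt Om.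
Proof.
  intros HO Hx n Hd.
  assert (HcR : 0 < cR Om) by (unfold cR; apply Rmult_lt_0_compat; [apply Rmult_lt_0_compat; [lra|apply pow_lt; apply PI_RGT_0]|apply exp_pos]).
  assert (HM1 : 1 <= Mt Om) by (unfold Mt; pose proof PI_RGT_0; nra).
  assert (HMp : PI <= Mt Om) by (unfold Mt; pose proof PI_RGT_0; nra).
  assert (Hcos : Cmod (ccos (RtoC (rhot p n) * RtoC x)) <= 1).
  { change (ccos (RtoC (rhot p n) * RtoC x)) with (cc (RtoC (rhot p n)) x). rewrite cc_real, Cmod_R.
    apply Rabs_le. pose proof (COS_bound (rhot p n * x)). lra. }
  unfold psit. destruct (rhohat_is0 p lam n) eqn:E; cbn [fst snd].
  - split; [|lra]. rewrite csin_real, Cmod_mult, !Cmod_R.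
    assert (Rabs (sin (rhot p n * x)) <= 1) by (apply Rabs_le; pose proof (SIN_bound (rhot p n * x)); lra).
    rewrite Rabs_Ropp, (Rabs_right x) by lra.
    assert (x * Rabs (sin (rhot p n * x)) <= x * 1) by (apply Rmult_le_compat_l; lra). lra.
  - apply rhohat_is0_false in E. set (d := rhohat p lam n) in *.
    unfold Tmat, mv. cbn [fst snd rhoi]. fold d. split.
    2:{ replace (RtoC 0 * ccos (rho lam n * RtoC x) + RtoC 1 * ccos (RtoC (rhot p n) * RtoC x))%C
          with (ccos (RtoC (rhot p n) * RtoC x)) by ring. lra. }
    replace (/ d * ccos (rho lam n * RtoC x) + - / d * ccos (RtoC (rhot p n) * RtoC x))%C
      with (/ d * Rk p lam n x - RtoC (x * sin (rhot p n * x)))%C.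
    2:{ unfold Rk. fold d. change (ccos (rho lam n * RtoC x)) with (cc (rho lam n) x).
        change (ccos (RtoC (rhot p n) * RtoC x)) with (cc (RtoC (rhot p n)) x). rewrite cc_real.
        field. exact E. }
    eapply Rle_trans; [apply Cmod_minus_tri|]. rewrite Cmod_mult, Cmod_inv, Cmod_R by exact E.
    assert (Hdp : 0 < Cmod d) by (apply Cmod_gt_0; exact E).
    destruct (Rk_bound0 p lam Om n x HO Hd Hx) as [R1 R2]. fold d in R1, R2.
    pose proof (Cmod_le_sum (Rk p lam n x)).
    assert (A : / Cmod d * Cmod (Rk p lam n x) <= 2 * cR Om * Om).
    { apply Rmult_le_reg_l with (Cmod d); auto. rewrite <- Rmult_assoc, Rinv_r by lra.
      assert (Cmod d ^ 2 <= Cmod d * Om) by nra. nra. }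
    assert (Rabs (x * sin (rhot p n * x)) <= PI).
    { rewrite Rabs_mult, (Rabs_right x) by lra.
      assert (Rabs (sin (rhot p n * x)) <= 1) by (apply Rabs_le; pose proof (SIN_bound (rhot p n * x)); lra).
      pose proof (Rabs_pos (sin (rhot p n * x))). nra. }
    unfold Mt. lra.
Qed.

Definition gg p lam x (psi : nat -> vec2) n : vec2 :=
  ((rhohat p lam n * (fst (psit p lam x n) - fst (psi n)) + (snd (psit p lam x n) - snd (psi n)))%C,
   (snd (psit p lam x n) - snd (psi n))%C).

Lemma mv_mm A B v : mv (mm A B) v = mv A (mv B v).
Proof. destruct A as [[a b] [c d]], B as [[e f] [g h]], v as [v1 v2].
  unfold mv, mm; simpl. apply injective_projections; simpl; ring. Qed.

Lemma Qt_eq p lam alpha x n k j : rhohat p lam n = RtoC 0 ->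
  Qt p lam alpha x n false k j = Qt p lam alpha x n true k j.
Proof.
  intros H. unfold Qt. f_equal. cbn [lami]. unfold Dt.
  assert (E : csqrt (lam n) = csqrt (RtoC (rhot p n * rhot p n))).
  { rewrite csqrt_sq by apply rhot_ge0. change (csqrt (lam n)) with (rho lam n).
    unfold rhohat in H. replace (rho lam n) with ((rho lam n - RtoC (rhot p n)) + RtoC (rhot p n))%C by ring.
    rewrite H. ring. }
  rewrite E. reflexivity.
Qed.

Lemma g_eq_holds p lam alpha x psi :
  EpH_eq p lam alpha x psi (psit p lam x) -> g_eq p lam alpha x psi (gg p lam x psi).
Proof.
  intros HE n Hn. destruct (HE n Hn) as [Hf Hs].
  set (w := fun j => mv (Qmat p lam alpha x n (S j)) (mv (Tinv p lam (S j)) (psi (S j)))).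
  change (fun j => fst (mv (Qmat p lam alpha x n (S j)) (mv (Tinv p lam (S j)) (psi (S j))))) with (fun j => fst (w j)).
  change (fun j => snd (mv (Qmat p lam alpha x n (S j)) (mv (Tinv p lam (S j)) (psi (S j))))) with (fun j => snd (w j)).
  set (L0 := (fst (psit p lam x n) - fst (psi n))%C) in *.
  set (L1 := (snd (psit p lam x n) - snd (psi n))%C) in *.
  unfold Hmat in Hf, Hs. unfold gg; cbn [fst snd]. fold L0 L1.
  destruct (rhohat_is0 p lam n) eqn:E.
  - apply rhohat_is0_true in E.
    assert (Hs' : @is_series _ C_R_NormedModule (fun j => snd (w j)) L1).
    { eapply is_series_Cext; [|exact Hs]. intros j. cbv beta. rewrite mv_mm. reflexivity. }
    split; [|exact Hs'].
    rewrite E. replace (RtoC 0 * L0 + L1)%C with L1 by ring.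
    eapply is_series_Cext; [|exact Hs']. intros j. unfold w, mv, Qmat. cbn [fst snd].
    rewrite !(Qt_eq p lam alpha x n (S j)) by exact E. reflexivity.
  - apply rhohat_is0_false in E. set (d := rhohat p lam n) in *.
    assert (Hs' : @is_series _ C_R_NormedModule (fun j => snd (w j)) L1).
    { eapply is_series_Cext; [|exact Hs]. intros j. cbv beta. rewrite !mv_mm. unfold Tmat. fold d.
      change (mv (Qmat p lam alpha x n (S j)) (mv (Tinv p lam (S j)) (psi (S j)))) with (w j).
      unfold mv at 1. cbn [fst snd]. ring. }
    split; [|exact Hs'].
    assert (Hf' : @is_series _ C_R_NormedModule (fun j => (/ d * fst (w j) + - / d * snd (w j))%C) L0).
    { eapply is_series_Cext; [|exact Hf]. intros j. cbv beta. rewrite !mv_mm. unfold Tmat. fold d.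
      change (mv (Qmat p lam alpha x n (S j)) (mv (Tinv p lam (S j)) (psi (S j)))) with (w j).
      unfold mv at 1. cbn [fst snd]. reflexivity. }
    pose proof (is_series_Cplus _ _ _ _ (is_series_Cscal d _ _ Hf') Hs') as H.
    eapply is_series_Cext; [|exact H]. intros j. cbv beta. field. exact E.
Qed.

Lemma sum_n_fs (a : nat -> R) N : sum_n a N = fs a (S N).
Proof. induction N. rewrite sum_O. simpl. ring. rewrite sum_Sn, IHN. simpl. unfold plus; simpl. ring. Qed.

Lemma lim_le (v : nat -> R) (l : R) c : (forall N, v N <= c) -> is_lim_seq v l -> l <= c.
Proof. intros H Hl. assert (Hc := is_lim_seq_const c).
  pose proof (is_lim_seq_le v (fun _ => c) l c H Hl Hc). simpl in H0. exact H0. Qed.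

Lemma series_bound (a : nat -> R) c : (forall j, 0 <= a j) -> (forall L, fs a L <= c) ->
  ex_series a /\ Series a <= c.
Proof.
  intros Ha Hc.
  assert (Hinc : forall N, sum_n a N <= sum_n a (S N)).
  { intros N. rewrite sum_Sn. unfold plus; simpl. pose proof (Ha (S N)). lra. }
  assert (Hb : forall N, sum_n a N <= c) by (intros; rewrite sum_n_fs; auto).
  destruct (ex_finite_lim_seq_incr _ _ Hinc Hb) as [l Hl].
  assert (Hs : is_series a l) by exact Hl.
  split; [exists l; exact Hs|]. rewrite (is_series_unique a l Hs).
  apply (lim_le (sum_n a)); auto.
Qed.

Lemma lim_fs (u : nat -> nat -> R) (l : nat -> R) L :
  (forall j, (j < L)%nat -> is_lim_seq (fun N => u N j) (l j)) ->
  is_lim_seq (fun N => fs (fun j => u N j) L) (fs l L).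
Proof.
  induction L; intros H; simpl.
  - apply is_lim_seq_const.
  - apply (is_lim_seq_plus' _ _ (fs l L) (l L)); [apply IHL; intros; apply H; lia|apply H; lia].
Qed.

Lemma CIf_minus x f g : ccont f -> ccont g -> CIf x (fun t => (f t - g t)%C) = (CIf x f - CIf x g)%C.
Proof. intros [H1 H2] [H3 H4]. unfold CIf. simpl. unfold Cminus, Cplus, Copp; simpl.
  rewrite !(RI_ext (fun t => fst (f t) + - fst (g t)) (fun t => fst (f t) - fst (g t))) by (intros; ring).
  rewrite !(RI_ext (fun t => snd (f t) + - snd (g t)) (fun t => snd (f t) - snd (g t))) by (intros; ring).
  rewrite !RI_minus by auto. reflexivity. Qed.

Lemma sq_le_1plus a c : 0 <= a -> a ^ 2 <= c -> a <= 1 + c.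
Proof. intros Ha H. destruct (Rle_dec a 1); [assert (0 <= c) by nra; lra|nra]. Qed.

Lemma sqrt_le_1plus c : 0 <= c -> sqrt c <= 1 + c.
Proof. intros H. apply sq_le_1plus. apply sqrt_pos. rewrite pow2_sqrt; lra. Qed.

Lemma fs_sums_from_good p lam alpha Om :
  in_BOmega p Om lam alpha -> forall M, fs (fun j => xi p lam alpha (S j) ^ 2) M <= Om ^ 2.
Proof.
  intros [_ [Hex Hsq]] M.
  set (a := fun j => xi p lam alpha (S j) ^ 2) in *.
  assert (Ha : forall j, 0 <= a j) by (intros; unfold a; apply pow2_ge_0).
  assert (Hl : is_lim_seq (sum_n a) (Series a)) by exact (Series_correct a Hex).
  assert (Hinc : forall N, sum_n a N <= sum_n a (S N)).
  { intros N. rewrite sum_Sn. unfold plus; simpl. pose proof (Ha (S N)). lra. }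
  pose proof (is_lim_seq_incr_compare _ _ Hl Hinc) as Hle.
  assert (H0 : 0 <= Series a) by (pose proof (Hle 0%nat); rewrite sum_O in H; pose proof (Ha 0%nat); lra).
  assert (HS : Series a <= Om ^ 2).
  { rewrite <- (pow2_sqrt (Series a)) by auto. apply pow_incr. split; auto using sqrt_pos. }
  destruct M. simpl. pose proof (pow2_ge_0 Om); lra.
  rewrite <- sum_n_fs. pose proof (Hle M). lra.
Qed.

Lemma lim_sq u (l : R) : is_lim_seq u l -> is_lim_seq (fun N => u N ^ 2) (l ^ 2).
Proof. intros H. apply (is_lim_seq_ext (fun N => u N * u N)); [intros; ring|].
  replace (l ^ 2) with (l * l) by ring. apply is_lim_seq_mult'; auto. Qed.
Lemma lim_abs u (l : R) : is_lim_seq u l -> is_lim_seq (fun N => Rabs (u N)) (Rabs l).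
Proof. intros H. apply (is_lim_seq_abs u l H). Qed.

Lemma dd_split p lam alpha psi x M n :
  dd p lam alpha psi x M n =
  (CIf x (fun t => (cc (rho lam n) t * FM p lam alpha psi M t)%C)
   - CIf x (fun t => (cc (RtoC (rhot p n)) t * FM p lam alpha psi M t)%C))%C.
Proof.
  unfold dd. rewrite <- CIf_minus by (apply ccont_mult; [apply ccont_cc|apply ccont_FM]).
  apply CIf_ext; intros; ring.
Qed.

Definition Cst_of p Om K := 1 + K * Mt Om + 2 * C3 p Om (K * Mt Om) + C4 p Om (K * Mt Om) + 2 * C4 p Om (K * Mt Om) ^ 2.

Theorem lemma3p5 :
  forall (p : nat) (Omega K : R), 0 < Omega -> 0 < K ->
  exists Cst : R,
  forall lam alpha : nat -> C, in_BOmegaK p Omega K lam alpha ->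
  forall x : R, 0 <= x <= PI ->
  forall psi : nat -> vec2,
    bounded_seq psi -> EpH_eq p lam alpha x psi (psit p lam x) ->
  exists g : nat -> vec2,
    g_eq p lam alpha x psi g /\
    (forall n : nat, (1 <= n)%nat ->
       Cmod (fst (psi n)) <= Cst /\ Cmod (snd (psi n)) <= Cst) /\
    (forall n : nat, (1 <= n)%nat ->
       Cmod (fst (g n)) <= Cst /\ Cmod (snd (g n)) <= Cst) /\
    (ex_series (fun j => Cmod (fst (g (S j))) ^ 2) /\
     sqrt (Series (fun j => Cmod (fst (g (S j))) ^ 2)) <= Cst) /\
    (ex_series (fun j => Cmod (snd (g (S j))) ^ 2) /\
     sqrt (Series (fun j => Cmod (snd (g (S j))) ^ 2)) <= Cst) /\
    (ex_series (fun j => Cmod (fst (g (S j)) - snd (g (S j)))) /\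
     Series (fun j => Cmod (fst (g (S j)) - snd (g (S j)))) <= Cst).
Proof.
  intros p Om K HO HK. exists (Cst_of p Om K).
  intros lam alpha [HBO HKinv] x Hx psi Hb HE.
  set (B := K * Mt Om).
  pose proof (fs_sums_from_good _ _ _ _ HBO) as Hs.
  assert (Hxi : forall k, (1 <= k)%nat -> xi p lam alpha k <= Om).
  { intros k Hk. assert (xi p lam alpha k ^ 2 <= Om ^ 2).
    { replace k with (S (k - 1)) by lia. eapply Rle_trans; [|apply (Hs k)].
      apply (fs_term (fun j => xi p lam alpha (S j) ^ 2) k (k - 1)); [lia|intros; apply pow2_ge_0]. }
    pose proof (xi_ge0 p lam alpha k). nra. }
  assert (Hpsit : forall n, (1 <= n)%nat ->
            Cmod (fst (psit p lam x n)) <= Mt Om /\ Cmod (snd (psit p lam x n)) <= Mt Om).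
  { intros n Hn. apply psit_bound; auto. pose proof (dl_le p lam alpha n). pose proof (Hxi n Hn). lra. }
  assert (Hpsi : forall n, (1 <= n)%nat -> Cmod (fst (psi n)) <= B /\ Cmod (snd (psi n)) <= B).
  { destruct (HKinv x Hx) as [_ [_ H3]]. apply (H3 psi (psit p lam x) Hb HE (Mt Om) Hpsit). }
  assert (HMt : 0 < Mt Om).
  { assert (0 < cR Om) by (unfold cR; apply Rmult_lt_0_compat; [apply Rmult_lt_0_compat; [lra|apply pow_lt; apply PI_RGT_0]|apply exp_pos]).
    unfold Mt. pose proof PI_RGT_0. assert (0 < 2 * cR Om * Om) by (apply Rmult_lt_0_compat; lra). lra. }
  assert (HB : 0 <= B) by (unfold B; apply Rmult_le_pos; lra).
  assert (Hg : good p lam alpha psi Om B) by (split; [lra|split; [lra|split; [exact Hs|exact Hpsi]]]).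
  set (g := gg p lam x psi).
  pose proof (g_eq_holds p lam alpha x psi HE) as HgE. fold g in HgE.
  pose proof (KF_ge0 _ _ _ _ _ _ x Hg Hx) as HKF.
  assert (HcR : 0 <= cR Om).
  { unfold cR. apply Rmult_le_pos; [apply Rmult_le_pos; [lra|apply pow2_ge_0]|left; apply exp_pos]. }
  assert (Hc3 : 0 <= C3 p Om B) by (unfold C3; pose proof (pos_INR p); pose proof PI_RGT_0; apply Rmult_le_pos; [nra|auto]).
  assert (Hc4 : 0 <= C4 p Om B).
  { unfold C4. pose proof PI_RGT_0. assert (0 <= PI ^ 3) by (apply pow_le; lra).
    assert (0 <= 2 * cR Om * (PI + KF p Om B / 2) + 1) by nra.
    apply Rplus_le_le_0_compat; apply Rmult_le_pos; auto; apply pow2_ge_0. }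
  set (c3 := C3 p Om B) in *. set (c4 := C4 p Om B) in *.
  set (P0 := fun n N => CIf x (fun t => (cc (rho lam n) t * FM p lam alpha psi (S N) t)%C)).
  set (P1 := fun n N => CIf x (fun t => (cc (RtoC (rhot p n)) t * FM p lam alpha psi (S N) t)%C)).
  assert (Lim : forall n, (1 <= n)%nat ->
    is_lim_seq (fun N => fst (P0 n N)) (fst (fst (g n))) /\
    is_lim_seq (fun N => snd (P0 n N)) (snd (fst (g n))) /\
    is_lim_seq (fun N => fst (P1 n N)) (fst (snd (g n))) /\
    is_lim_seq (fun N => snd (P1 n N)) (snd (snd (g n)))).
  { intros n Hn. destruct (HgE n Hn) as [H0 H1].
    pose proof (is_series_fst _ _ H0) as A1. pose proof (is_series_snd _ _ H0) as A2.
    pose proof (is_series_fst _ _ H1) as A3. pose proof (is_series_snd _ _ H1) as A4.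
    change (fun j => fst (mv (Qmat p lam alpha x n (S j)) (mv (Tinv p lam (S j)) (psi (S j)))))
      with (ser_fst p lam alpha x psi n) in A1, A2.
    change (fun j => snd (mv (Qmat p lam alpha x n (S j)) (mv (Tinv p lam (S j)) (psi (S j)))))
      with (ser_snd p lam alpha x psi n) in A3, A4.
    split; [|split; [|split]]; (eapply is_lim_seq_ext; [|eassumption]); intros N; cbv beta;
      unfold P0, P1; rewrite ?ser_fst_sum, ?ser_snd_sum; reflexivity. }
  assert (Sg1 : forall L, fs (fun j => Cmod (snd (g (S j))) ^ 2) L <= c3).
  { intros L. rewrite (fs_ext _ (fun j => fst (snd (g (S j))) ^ 2 + snd (snd (g (S j))) ^ 2))
      by (intros; apply Cmod_sq).
    apply (lim_le (fun N => fs (fun j => fst (P1 (S j) N) ^ 2 + snd (P1 (S j) N) ^ 2) L)).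
    - intros N. unfold P1, c3. apply S1_bound; auto.
    - apply lim_fs. intros j Hj. destruct (Lim (S j) ltac:(lia)) as [_ [_ [A1 A2]]].
      apply is_lim_seq_plus'; apply lim_sq; auto. }
  assert (Sd : forall L, fs (fun j => Cmod (fst (g (S j)) - snd (g (S j)))) L <= c4).
  { intros L. eapply Rle_trans.
    { apply (fs_le _ (fun j => Rabs (fst (fst (g (S j)) - snd (g (S j)))%C) + Rabs (snd (fst (g (S j)) - snd (g (S j)))%C))).
      intros; apply Cmod_le_sum. }
    apply (lim_le (fun N => fs (fun j => Rabs (fst (dd p lam alpha psi x (S N) (S j))) + Rabs (snd (dd p lam alpha psi x (S N) (S j)))) L)).
    - intros N. unfold c4. apply D_bound; auto.
    - apply lim_fs. intros j Hj. destruct (Lim (S j) ltac:(lia)) as [A1 [A2 [A3 A4]]].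
      apply (is_lim_seq_ext (fun N => Rabs (fst (P0 (S j) N) - fst (P1 (S j) N)) + Rabs (snd (P0 (S j) N) - snd (P1 (S j) N)))).
      { intros N. rewrite dd_split. reflexivity. }
      apply is_lim_seq_plus'; apply lim_abs; apply is_lim_seq_minus'; auto. }
  assert (T1 : forall n, (1 <= n)%nat -> Cmod (snd (g n)) ^ 2 <= c3).
  { intros n Hn. eapply Rle_trans; [|apply (Sg1 n)].
    replace n with (S (n - 1)) at 1 by lia.
    apply (fs_term (fun j => Cmod (snd (g (S j))) ^ 2) n (n - 1)); [lia|intros; apply pow2_ge_0]. }
  assert (T2 : forall n, (1 <= n)%nat -> Cmod (fst (g n) - snd (g n)) <= c4).
  { intros n Hn. eapply Rle_trans; [|apply (Sd n)].
    replace n with (S (n - 1)) at 1 2 by lia.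
    apply (fs_term (fun j => Cmod (fst (g (S j)) - snd (g (S j)))) n (n - 1)); [lia|intros; apply Cmod_ge_0]. }
  assert (T3 : forall n, (1 <= n)%nat -> Cmod (fst (g n)) ^ 2 <= 2 * Cmod (snd (g n)) ^ 2 + 2 * c4 * Cmod (fst (g n) - snd (g n))).
  { intros n Hn. pose proof (T2 n Hn).
    assert (Cmod (fst (g n)) <= Cmod (fst (g n) - snd (g n)) + Cmod (snd (g n))).
    { replace (fst (g n)) with ((fst (g n) - snd (g n)) + snd (g n))%C at 1 by ring. apply Cmod_triangle. }
    set (a := Cmod (fst (g n))) in *. set (b := Cmod (snd (g n))) in *. set (d := Cmod (fst (g n) - snd (g n))) in *.
    assert (0 <= a) by apply Cmod_ge_0. assert (0 <= b) by apply Cmod_ge_0. assert (0 <= d) by apply Cmod_ge_0.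
    assert (a ^ 2 <= (d + b) ^ 2) by (apply pow_incr; lra).
    assert (0 <= (d - b) ^ 2) by apply pow2_ge_0.
    assert (d * d <= c4 * d) by (apply Rmult_le_compat_r; lra).
    nra. }
  assert (Sg0 : forall L, fs (fun j => Cmod (fst (g (S j))) ^ 2) L <= 2 * c3 + 2 * c4 ^ 2).
  { intros L. eapply Rle_trans.
    { apply (fs_le _ (fun j => 2 * Cmod (snd (g (S j))) ^ 2 + 2 * c4 * Cmod (fst (g (S j)) - snd (g (S j))))).
      intros j _. apply T3; lia. }
    rewrite fs_plus, !fs_scal. pose proof (Sg1 L). pose proof (Sd L). nra. }
  unfold Cst_of. fold B. fold c3 c4.
  exists g. split; [exact HgE|].
  split; [intros n Hn; destruct (Hpsi n Hn); pose proof (pow2_ge_0 c4); split; lra|].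
  split.
  { intros n Hn. pose proof (T1 n Hn). pose proof (T2 n Hn).
    assert (Cmod (snd (g n)) <= 1 + c3) by (apply sq_le_1plus; auto using Cmod_ge_0).
    assert (Cmod (fst (g n)) <= Cmod (fst (g n) - snd (g n)) + Cmod (snd (g n))).
    { replace (fst (g n)) with ((fst (g n) - snd (g n)) + snd (g n))%C at 1 by ring. apply Cmod_triangle. }
    pose proof (pow2_ge_0 c4). split; lra. }
  split.
  { destruct (series_bound _ _ (fun j => pow2_ge_0 _) Sg0) as [Hex Hle]. split; auto.
    eapply Rle_trans; [apply sqrt_le_1_alt; exact Hle|].
    eapply Rle_trans; [apply sqrt_le_1plus; pose proof (pow2_ge_0 c4); lra|]. pose proof (pow2_ge_0 c4). lra. }
  split.
  { destruct (series_bound _ _ (fun j => pow2_ge_0 _) Sg1) as [Hex Hle]. split; auto.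
    eapply Rle_trans; [apply sqrt_le_1_alt; exact Hle|].
    eapply Rle_trans; [apply sqrt_le_1plus; lra|]. pose proof (pow2_ge_0 c4). lra. }
  { destruct (series_bound _ _ (fun j => Cmod_ge_0 _) Sd) as [Hex Hle]. split; auto.
    pose proof (pow2_ge_0 c4). lra. }
Qed.
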